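(* Let $T$ be a real-analytic diffeomorphism of $\mathbb{T}^2$ homotopic to the identity such that the lifts of $T$ and $T^{-1}$ extend to entire maps of $\mathbb{C}^2$, and set $G(\alpha)=T^{-1}\circ R_\alpha\circ T$. Let $p,q$ be coprime integers with $q\ge1$, $p/q\in[0,1]$, let $c\ge0$ and $\Phi(x,y)=\left(x+\frac{1}{2q},\ y+c\sin(2\pi qx)\right)$, and $G'(\alpha)=(\Phi\circ T)^{-1}\circ R_\alpha\circ(\Phi\circ T)$. Then for every $r\ge0$, $\varepsilon>0$ and $\tau\in\mathbb{N}$ there exists an interval $I$ of positive length centered at $p/q$ such that for all $\alpha\in I$, $$\max_{i=0,\dots,\tau}\left|G(\alpha)^i-G'(\alpha)^i\right|_r<\varepsilon .$$
   Context: $R_\alpha(x,y)=(x+\alpha,y)$; $F^i$ denotes the $i$-th iterate. For $r\ge0$, $A^r=\{(x,y)\in\mathbb{C}^2:|\mathrm{Im}\,x|\le r,|\mathrm{Im}\,y|\le r\}$ and for maps $F,G$ of $\mathbb{C}^2$ whose difference is $\mathbb{Z}^2$-periodic, $|F-G|_r=\max_{i=1,2}\sup_{A^r}|F_i-G_i|$. *)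

(* Defs.v *)
From Stdlib Require Import Reals ZArith.
From Coquelicot Require Import Coquelicot.
Open Scope R_scope.

Definition C2 := (C * C)%type.
Definition R2 := (R * R)%type.

Definition Csin (z : C) : C :=
  (sin (Re z) * cosh (Im z), cos (Re z) * sinh (Im z)).

(* f : C^2 -> C is entire: jointly continuous and holomorphic in each
   variable separately at every point (Osgood's definition). *)
Definition entire_fun (f : C2 -> C) : Prop :=
  forall (z w : C),
    continuous (f : prod_UniformSpace C_UniformSpace C_UniformSpace -> C_UniformSpace) (z, w) /\
    @ex_derive C_AbsRing C_NormedModule (fun u : C => f (u, w)) z /\
    @ex_derive C_AbsRing C_NormedModule (fun u : C => f (z, u)) w.

Definition entire_map (F : C2 -> C2) : Prop :=
  entire_fun (fun p => fst (F p)) /\ entire_fun (fun p => snd (F p)).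

Definition extends (f : R2 -> R2) (F : C2 -> C2) : Prop :=
  forall x y : R, F (RtoC x, RtoC y) = (RtoC (fst (f (x, y))), RtoC (snd (f (x, y)))).

Definition lift_homotopic_id (f : R2 -> R2) : Prop :=
  forall (x y : R) (m n : Z),
    f (x + IZR m, y + IZR n) = (fst (f (x, y)) + IZR m, snd (f (x, y)) + IZR n).

Definition Rot (a : R) (p : C2) : C2 := (Cplus (fst p) (RtoC a), snd p).

Definition Phi (q : Z) (c : R) (p : C2) : C2 :=
  (Cplus (fst p) (RtoC (/ (2 * IZR q))),
   Cplus (snd p) (Cmult (RtoC c) (Csin (Cmult (RtoC (2 * PI * IZR q)) (fst p))))).

Definition Phi_inv (q : Z) (c : R) (p : C2) : C2 :=
  let x' := Cminus (fst p) (RtoC (/ (2 * IZR q))) in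
  (x', Cminus (snd p) (Cmult (RtoC c) (Csin (Cmult (RtoC (2 * PI * IZR q)) x')))).

Definition Gmap (Tc Tic : C2 -> C2) (a : R) (p : C2) : C2 := Tic (Rot a (Tc p)).
Definition Gmap' (Tc Tic : C2 -> C2) (q : Z) (c : R) (a : R) (p : C2) : C2 :=
  Tic (Phi_inv q c (Rot a (Phi q c (Tc p)))).

Definition in_strip (r : R) (p : C2) : Prop :=
  Rabs (Im (fst p)) <= r /\ Rabs (Im (snd p)) <= r.

(* Main.v *)
Require Import Defs.
From Stdlib Require Import Reals Lra Lia ZArith IndefiniteDescription Classical.
From Coquelicot Require Import Coquelicot.
Open Scope R_scope.

Definition ccont (g : C -> C) (z : C) := forall e, 0 < e -> exists d, 0 < d /\
  forall y, Cmod (y - z)%C < d -> Cmod (g y - g z)%C < e.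
Definition cdiff (g : C -> C) (z l : C) := forall e, 0 < e -> exists d, 0 < d /\
  forall y, Cmod (y - z)%C < d -> Cmod (g y - g z - l * (y - z))%C <= e * Cmod (y - z)%C.

Lemma Cmod_minus_sym (x y : C) : Cmod (x - y) = Cmod (y - x).
Proof. rewrite <- Cmod_opp. f_equal. ring. Qed.

Lemma Cmod_tri3 (x y z : C) : Cmod (x + y + z) <= Cmod x + Cmod y + Cmod z.
Proof. eapply Rle_trans; [apply Cmod_triangle|]. pose proof (Cmod_triangle x y). lra. Qed.

Lemma Cmod_minus_le (x y : C) : Cmod (x - y) <= Cmod x + Cmod y.
Proof. unfold Cminus. eapply Rle_trans; [apply Cmod_triangle|]. rewrite Cmod_opp. lra. Qed.

Lemma Cmod_rev_tri (x y : C) : Cmod x - Cmod y <= Cmod (x - y).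
Proof. replace x with ((x - y) + y)%C at 1 by ring. pose proof (Cmod_triangle (x-y) y). lra. Qed.

Lemma cdiff_ccont g z l : cdiff g z l -> ccont g z.
Proof.
  intros H e He. destruct (H 1 Rlt_0_1) as [d [Hd Hy]].
  exists (Rmin d (e / (1 + Cmod l + 1))). split.
  { apply Rmin_glb_lt; auto. apply Rdiv_lt_0_compat; auto. pose proof (Cmod_ge_0 l); lra. }
  intros y Hy'. assert (H1 : Cmod (y - z) < d) by (eapply Rlt_le_trans; [apply Hy'| apply Rmin_l]).
  assert (H2 : Cmod (y - z) < e / (1 + Cmod l + 1)) by (eapply Rlt_le_trans; [apply Hy'| apply Rmin_r]).
  specialize (Hy y H1).
  replace (g y - g z)%C with ((g y - g z - l * (y - z)) + l * (y - z))%C by ring.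
  eapply Rle_lt_trans; [apply Cmod_triangle|]. rewrite Cmod_mult.
  pose proof (Cmod_ge_0 l). pose proof (Cmod_ge_0 (y - z)).
  apply Rmult_lt_compat_r with (r := 1 + Cmod l + 1) in H2; [|lra].
  unfold Rdiv in H2. rewrite Rmult_assoc, Rinv_l, Rmult_1_r in H2 by lra. nra.
Qed.

Lemma cdiff_const c z : cdiff (fun _ => c) z 0.
Proof. intros e He. exists 1. split; [lra|]. intros y _.
  replace (c - c - 0 * (y - z))%C with (RtoC 0) by ring. rewrite Cmod_0.
  pose proof (Cmod_ge_0 (y - z)). nra. Qed.

Lemma cdiff_id z : cdiff (fun y => y) z 1.
Proof. intros e He. exists 1. split; [lra|]. intros y _.
  replace (y - z - 1 * (y - z))%C with (RtoC 0) by ring. rewrite Cmod_0.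
  pose proof (Cmod_ge_0 (y - z)). nra. Qed.

Lemma cdiff_plus g h z lg lh : cdiff g z lg -> cdiff h z lh -> cdiff (fun y => g y + h y)%C z (lg + lh)%C.
Proof.
  intros Hg Hh e He. destruct (Hg (e/2)) as [d1 [Hd1 H1]]; [lra|].
  destruct (Hh (e/2)) as [d2 [Hd2 H2]]; [lra|].
  exists (Rmin d1 d2). split; [apply Rmin_glb_lt; auto|]. intros y Hy.
  specialize (H1 y (Rlt_le_trans _ _ _ Hy (Rmin_l _ _))).
  specialize (H2 y (Rlt_le_trans _ _ _ Hy (Rmin_r _ _))).
  replace (g y + h y - (g z + h z) - (lg + lh) * (y - z))%C with
    ((g y - g z - lg * (y - z)) + (h y - h z - lh * (y - z)))%C by ring.
  eapply Rle_trans; [apply Cmod_triangle|]. lra.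
Qed.

Lemma cdiff_scal g z lg k : cdiff g z lg -> cdiff (fun y => k * g y)%C z (k * lg)%C.
Proof.
  intros Hg e He. destruct (Hg (e / (Cmod k + 1))) as [d [Hd H]].
  { apply Rdiv_lt_0_compat; auto. pose proof (Cmod_ge_0 k); lra. }
  exists d. split; auto. intros y Hy. specialize (H y Hy).
  replace (k * g y - k * g z - k * lg * (y - z))%C with (k * (g y - g z - lg * (y - z)))%C by ring.
  rewrite Cmod_mult. pose proof (Cmod_ge_0 k). pose proof (Cmod_ge_0 (y-z)).
  apply Rle_trans with (Cmod k * (e / (Cmod k + 1) * Cmod (y - z))).
  { apply Rmult_le_compat_l; auto. }
  assert (e / (Cmod k + 1) * (Cmod k) <= e).
  { assert (E : e / (Cmod k + 1) * (Cmod k + 1) = e) by (field; lra).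
    assert (0 < e / (Cmod k + 1)) by (apply Rdiv_lt_0_compat; lra). nra. }
  nra.
Qed.

Lemma cdiff_mult g h z lg lh : cdiff g z lg -> cdiff h z lh ->
  cdiff (fun y => g y * h y)%C z (lg * h z + g z * lh)%C.
Proof.
  intros Hg Hh e He.
  assert (Hhc : ccont h z) by (eapply cdiff_ccont; eauto).
  set (A := Cmod (h z) + 1). set (B := Cmod lg). set (G := Cmod (g z)).
  assert (HA : 0 < A) by (unfold A; pose proof (Cmod_ge_0 (h z)); lra).
  assert (HB : 0 <= B) by apply Cmod_ge_0. assert (HG : 0 <= G) by apply Cmod_ge_0.
  set (e' := e / (A + B + G + 1)).
  assert (He' : 0 < e') by (unfold e'; apply Rdiv_lt_0_compat; lra).
  destruct (Hg e' He') as [d1 [Hd1 H1]]. destruct (Hh e' He') as [d2 [Hd2 H2]].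
  destruct (Hhc (Rmin 1 e')) as [d3 [Hd3 H3]]; [apply Rmin_glb_lt; lra|].
  exists (Rmin d1 (Rmin d2 d3)). split; [repeat apply Rmin_glb_lt; auto|]. intros y Hy.
  assert (Hy1 : Cmod (y - z) < d1) by (eapply Rlt_le_trans; [apply Hy|apply Rmin_l]).
  assert (Hy2 : Cmod (y - z) < d2) by (eapply Rlt_le_trans; [apply Hy|]; eapply Rle_trans; [apply Rmin_r|apply Rmin_l]).
  assert (Hy3 : Cmod (y - z) < d3) by (eapply Rlt_le_trans; [apply Hy|]; eapply Rle_trans; [apply Rmin_r|apply Rmin_r]).
  specialize (H1 y Hy1). specialize (H2 y Hy2). specialize (H3 y Hy3).
  replace (g y * h y - g z * h z - (lg * h z + g z * lh) * (y - z))%C with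
    ((g y - g z - lg * (y - z)) * h y + lg * (y - z) * (h y - h z) + g z * (h y - h z - lh * (y - z)))%C by ring.
  eapply Rle_trans; [apply Cmod_tri3|]. rewrite !Cmod_mult.
  assert (Hhy : Cmod (h y) <= A).
  { unfold A. replace (h y) with ((h y - h z) + h z)%C by ring. eapply Rle_trans; [apply Cmod_triangle|].
    assert (Rmin 1 e' <= 1) by apply Rmin_l. lra. }
  assert (Hd : Cmod (h y - h z) <= e') by (assert (Rmin 1 e' <= e') by apply Rmin_r; lra).
  fold B G. pose proof (Cmod_ge_0 (y - z)). pose proof (Cmod_ge_0 (h y)).
  pose proof (Cmod_ge_0 (g y - g z - lg * (y - z))). pose proof (Cmod_ge_0 (h y - h z)).
  set (m := Cmod (y - z)) in *.
  assert (T1 : Cmod (g y - g z - lg * (y - z)) * Cmod (h y) <= e' * m * A).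
  { apply Rmult_le_compat; auto. }
  assert (T2 : B * m * Cmod (h y - h z) <= B * m * e').
  { apply Rmult_le_compat_l; auto. apply Rmult_le_pos; auto. }
  assert (T3 : G * Cmod (h y - h z - lh * (y - z)) <= G * (e' * m)) by (apply Rmult_le_compat_l; auto).
  assert (Hee : e' * (A + B + G + 1) = e).
  { unfold e'. field. lra. }
  nra.
Qed.

Lemma cdiff_inv z : z <> RtoC 0 -> cdiff (fun y => / y)%C z (- / (z * z))%C.
Proof.
  intros Hz e He. assert (Hm : 0 < Cmod z) by (apply Cmod_gt_0; auto).
  set (m := Cmod z) in *.
  exists (Rmin (m / 2) (e * m * m * m / 2)). split.
  { apply Rmin_glb_lt; [lra|]. apply Rdiv_lt_0_compat; [|lra]. repeat apply Rmult_lt_0_compat; auto. }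
  intros y Hy.
  assert (Hy1 : Cmod (y - z) < m / 2) by (eapply Rlt_le_trans; [apply Hy|apply Rmin_l]).
  assert (Hy2 : Cmod (y - z) < e * m * m * m / 2) by (eapply Rlt_le_trans; [apply Hy|apply Rmin_r]).
  assert (Hym : m / 2 <= Cmod y).
  { pose proof (Cmod_rev_tri z y). rewrite Cmod_minus_sym in H. fold m in H. lra. }
  assert (Hy0 : y <> RtoC 0). { intro E. rewrite E, Cmod_0 in Hym. lra. }
  replace (/ y - / z - - / (z * z) * (y - z))%C with ((y - z) * (y - z) * / (y * z * z))%C.
  2:{ field. split; auto. }
  rewrite !Cmod_mult, Cmod_inv, !Cmod_mult.
  2:{ apply Cmult_neq_0; [apply Cmult_neq_0|]; auto. }
  fold m. pose proof (Cmod_ge_0 (y - z)). set (t := Cmod (y - z)) in *.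
  apply Rle_trans with (t * t * / (m / 2 * m * m)).
  { apply Rmult_le_compat_l; [nra|]. apply Rinv_le_contravar.
    { repeat apply Rmult_lt_0_compat; lra. }
    apply Rmult_le_compat_r; [lra|]. apply Rmult_le_compat_r; lra. }
  assert (t * / (m / 2 * m * m) <= e).
  { apply Rmult_le_reg_r with (m / 2 * m * m). { repeat apply Rmult_lt_0_compat; lra. }
    rewrite Rmult_assoc, Rinv_l. 2:{ apply Rgt_not_eq. repeat apply Rmult_lt_0_compat; lra. }
    lra. }
  nra.
Qed.

Lemma im_le_Cmod (c : C) : Rabs (snd c) <= Cmod c.
Proof.
  destruct c as [u v]. pose proof (re_le_Cmod (v, u)). unfold Cmod in *. simpl in *.
  replace (u * (u * 1) + v * (v * 1)) with (v * (v * 1) + u * (u * 1)) by ring. exact H.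
Qed.

Lemma RInt_plusR f g a b : ex_RInt f a b -> ex_RInt g a b ->
  RInt (fun x => f x + g x) a b = RInt f a b + RInt g a b.
Proof. intros; apply (RInt_plus f g); auto. Qed.
Lemma RInt_minusR f g a b : ex_RInt f a b -> ex_RInt g a b ->
  RInt (fun x => f x - g x) a b = RInt f a b - RInt g a b.
Proof. intros; apply (RInt_minus f g); auto. Qed.
Lemma RInt_scalR f k a b : ex_RInt f a b -> RInt (fun x => k * f x) a b = k * RInt f a b.
Proof. intros; apply (RInt_scal f); auto. Qed.
Lemma RInt_ChaslesR f a b c : ex_RInt f a b -> ex_RInt f b c -> RInt f a b + RInt f b c = RInt f a c.
Proof. intros; apply (RInt_Chasles f); auto. Qed.
Lemma ex_RInt_plusR f g a b : ex_RInt f a b -> ex_RInt g a b -> ex_RInt (fun x => f x + g x) a b.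
Proof. intros; apply (ex_RInt_plus f g); auto. Qed.
Lemma ex_RInt_minusR f g a b : ex_RInt f a b -> ex_RInt g a b -> ex_RInt (fun x => f x - g x) a b.
Proof. intros; apply (ex_RInt_minus f g); auto. Qed.
Lemma ex_RInt_scalR f k a b : ex_RInt f a b -> ex_RInt (fun x => k * f x) a b.
Proof. intros; apply (ex_RInt_scal f); auto. Qed.

Definition SI (g : C -> C) (p : R -> C) (a b : R) : C :=
  (RInt (fun t => fst (g (p t))) a b, RInt (fun t => snd (g (p t))) a b).

Definition lip1 (p : R -> C) := forall s t, Cmod (p s - p t)%C <= Rabs (s - t).

Definition SIok (g : C -> C) (p : R -> C) (a b : R) :=
  ex_RInt (fun t => fst (g (p t))) a b /\ ex_RInt (fun t => snd (g (p t))) a b.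

Lemma SIok_cont g p a b : lip1 p -> (forall t, Rmin a b <= t <= Rmax a b -> ccont g (p t)) -> SIok g p a b.
Proof.
  intros Hp Hc. split; apply (ex_RInt_continuous (V:=R_CompleteNormedModule)); intros t Ht; specialize (Hc t Ht);
  apply continuity_pt_filterlim; intros e He; destruct (Hc e He) as [d [Hd H]];
  exists d; split; auto; intros x [_ Hx]; simpl in Hx |- *; unfold R_dist, Rdist in *;
  (eapply Rle_lt_trans; [|apply (H (p x)); eapply Rle_lt_trans; [apply Hp|apply Hx]]).
  - pose proof (re_le_Cmod (g (p x) - g (p t))%C). simpl in H0 |- *.
    replace (fst (g (p x)) + - fst (g (p t))) with (fst (g (p x)) - fst (g (p t))) in H0 by ring. idtac. lra.
  - pose proof (im_le_Cmod (g (p x) - g (p t))%C). simpl in H0 |- *.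
    replace (snd (g (p x)) + - snd (g (p t))) with (snd (g (p x)) - snd (g (p t))) in H0 by ring. lra.
Qed.

Lemma SI_plus g h p a b : SIok g p a b -> SIok h p a b ->
  SI (fun z => g z + h z)%C p a b = (SI g p a b + SI h p a b)%C.
Proof. intros [G1 G2] [H1 H2]. unfold SI. simpl. rewrite !RInt_plusR; auto. Qed.

Lemma SI_scal g k p a b : SIok g p a b -> SI (fun z => k * g z)%C p a b = (k * SI g p a b)%C.
Proof. intros [G1 G2]. unfold SI, Cmult. simpl.
  rewrite !RInt_minusR, !RInt_plusR, !RInt_scalR; auto; apply ex_RInt_scalR; auto. Qed.

Lemma SIok_plus g h p a b : SIok g p a b -> SIok h p a b -> SIok (fun z => g z + h z)%C p a b.
Proof. intros [G1 G2] [H1 H2]; split; simpl; apply ex_RInt_plusR; auto. Qed.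
Lemma SIok_scal g k p a b : SIok g p a b -> SIok (fun z => k * g z)%C p a b.
Proof. intros [G1 G2]; split; simpl;
  [apply (ex_RInt_ext (fun t => fst k * fst (g (p t)) - snd k * snd (g (p t))))|
   apply (ex_RInt_ext (fun t => fst k * snd (g (p t)) + snd k * fst (g (p t))))];
  try (intros; simpl; ring);
  [apply ex_RInt_minusR|apply ex_RInt_plusR]; apply ex_RInt_scalR; auto. Qed.

Lemma SI_Chasles g p a b c : SIok g p a b -> SIok g p b c -> (SI g p a b + SI g p b c)%C = SI g p a c.
Proof. intros [G1 G2] [H1 H2]. unfold SI, Cplus. simpl. rewrite !RInt_ChaslesR; auto. Qed.

Lemma SI_ext g h p a b : (forall t, Rmin a b <= t <= Rmax a b -> g (p t) = h (p t)) -> SI g p a b = SI h p a b.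
Proof. intros H. unfold SI. f_equal; apply RInt_ext; intros t Ht; rewrite H; auto; lra. Qed.

Lemma SIok_ext g h p a b : (forall t, Rmin a b <= t <= Rmax a b -> g (p t) = h (p t)) -> SIok g p a b -> SIok h p a b.
Proof. intros H [G1 G2]. split; [eapply ex_RInt_ext; [|exact G1]|eapply ex_RInt_ext; [|exact G2]];
  intros t Ht; simpl; rewrite H; auto; lra. Qed.

Lemma SIok_minus g h p a b : SIok g p a b -> SIok h p a b -> SIok (fun z => g z - h z)%C p a b.
Proof. intros G H. apply (SIok_ext (fun z => g z + (-1) * h z)%C); [intros; ring|].
  apply SIok_plus; auto. apply SIok_scal; auto. Qed.

Lemma Cmod_le_sum (x : C) : Cmod x <= Rabs (fst x) + Rabs (snd x).
Proof.
  destruct x as [u v]. unfold Cmod. simpl.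
  pose proof (Rabs_pos u); pose proof (Rabs_pos v).
  rewrite <- (sqrt_square (Rabs u + Rabs v)) by lra. apply sqrt_le_1_alt.
  assert (Eu : u * (u * 1) = Rabs u * Rabs u) by (rewrite <- Rabs_mult, Rmult_1_r, Rabs_pos_eq; [ring|apply Rle_0_sqr]).
  assert (Ev : v * (v * 1) = Rabs v * Rabs v) by (rewrite <- Rabs_mult, Rmult_1_r, Rabs_pos_eq; [ring|apply Rle_0_sqr]).
  rewrite Eu, Ev. assert (0 <= Rabs u * Rabs v) by (apply Rmult_le_pos; auto). lra.
Qed.

Lemma SI_minus g h p a b : SIok g p a b -> SIok h p a b ->
  SI (fun z => g z - h z)%C p a b = (SI g p a b - SI h p a b)%C.
Proof. intros G H.
  rewrite (SI_ext _ (fun z => g z + (-1) * h z)%C) by (intros; ring).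
  rewrite SI_plus, SI_scal; auto. ring. apply SIok_scal; auto. Qed.

Lemma SI_bound g p a b M : a <= b -> SIok g p a b -> (forall t, a <= t <= b -> Cmod (g (p t)) <= M) ->
  Cmod (SI g p a b) <= 2 * (b - a) * M.
Proof.
  intros Hab [G1 G2] HM. eapply Rle_trans; [apply Cmod_le_sum|]. unfold SI; simpl.
  assert (A1 : Rabs (RInt (fun t => fst (g (p t))) a b) <= (b - a) * M).
  { apply abs_RInt_le_const; auto. intros t Ht. eapply Rle_trans; [apply re_le_Cmod|]. apply HM; auto. }
  assert (A2 : Rabs (RInt (fun t => snd (g (p t))) a b) <= (b - a) * M).
  { apply abs_RInt_le_const; auto. intros t Ht. eapply Rle_trans; [apply im_le_Cmod|]. apply HM; auto. }
  lra.
Qed.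

Definition hp (c : R) : R -> C := fun t => (t, c).
Definition vp (x : R) : R -> C := fun s => (x, s).

Lemma Cmod_pair_x (s t c : R) : Cmod ((s, c) - (t, c))%C = Rabs (s - t).
Proof. unfold Cmod, Cminus, Cplus, Copp. simpl. rewrite <- sqrt_Rsqr_abs. f_equal. unfold Rsqr. ring. Qed.
Lemma Cmod_pair_y (s t x : R) : Cmod ((x, s) - (x, t))%C = Rabs (s - t).
Proof. unfold Cmod, Cminus, Cplus, Copp. simpl. rewrite <- sqrt_Rsqr_abs. f_equal. unfold Rsqr. ring. Qed.

Lemma lip1_hp c : lip1 (hp c).
Proof. intros s t. unfold hp. rewrite Cmod_pair_x. lra. Qed.
Lemma lip1_vp x : lip1 (vp x).
Proof. intros s t. unfold vp. rewrite Cmod_pair_y. lra. Qed.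

Definition CI (g : C -> C) (a b c d : R) : C :=
  (SI g (hp c) a b + Ci * SI g (vp b) c d - SI g (hp d) a b - Ci * SI g (vp a) c d)%C.

Definition CIok (g : C -> C) (a b c d : R) :=
  SIok g (hp c) a b /\ SIok g (vp b) c d /\ SIok g (hp d) a b /\ SIok g (vp a) c d.

Definition inR (a b c d : R) (z : C) := Rmin a b <= fst z <= Rmax a b /\ Rmin c d <= snd z <= Rmax c d.
Definition onB (a b c d : R) (z : C) :=
  inR a b c d z /\ (fst z = a \/ fst z = b \/ snd z = c \/ snd z = d).

Lemma onB_h1 a b c d t : Rmin a b <= t <= Rmax a b -> onB a b c d (hp c t).
Proof. intros Ht. unfold onB, inR, hp; simpl. split; [split; auto|tauto].
  split; [apply Rmin_l|apply Rmax_l]. Qed.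
Lemma onB_h2 a b c d t : Rmin a b <= t <= Rmax a b -> onB a b c d (hp d t).
Proof. intros Ht. unfold onB, inR, hp; simpl. split; [split; auto|tauto].
  split; [apply Rmin_r|apply Rmax_r]. Qed.
Lemma onB_v1 a b c d t : Rmin c d <= t <= Rmax c d -> onB a b c d (vp a t).
Proof. intros Ht. unfold onB, inR, vp; simpl. split; [split; auto|tauto].
  split; [apply Rmin_l|apply Rmax_l]. Qed.
Lemma onB_v2 a b c d t : Rmin c d <= t <= Rmax c d -> onB a b c d (vp b t).
Proof. intros Ht. unfold onB, inR, vp; simpl. split; [split; auto|tauto].
  split; [apply Rmin_r|apply Rmax_r]. Qed.

Lemma CIok_cont g a b c d : (forall z, onB a b c d z -> ccont g z) -> CIok g a b c d.
Proof.
  intros H. unfold CIok. split; [|split; [|split]]; (apply SIok_cont; [apply lip1_hp||apply lip1_vp|]); intros t Ht; apply H.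
  - apply onB_h1; auto.
  - apply onB_v2; auto.
  - apply onB_h2; auto.
  - apply onB_v1; auto.
Qed.

Lemma CI_plus g h a b c d : CIok g a b c d -> CIok h a b c d -> CI (fun z => g z + h z)%C a b c d = (CI g a b c d + CI h a b c d)%C.
Proof. intros (G1&G2&G3&G4) (H1&H2&H3&H4). unfold CI. rewrite (SI_plus g h (hp c)), (SI_plus g h (hp d)), (SI_plus g h (vp a)), (SI_plus g h (vp b)); auto. ring. Qed.
Lemma CI_minus g h a b c d : CIok g a b c d -> CIok h a b c d -> CI (fun z => g z - h z)%C a b c d = (CI g a b c d - CI h a b c d)%C.
Proof. intros (G1&G2&G3&G4) (H1&H2&H3&H4). unfold CI. rewrite (SI_minus g h (hp c)), (SI_minus g h (hp d)), (SI_minus g h (vp a)), (SI_minus g h (vp b)); auto. ring. Qed.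
Lemma CI_scal g k a b c d : CIok g a b c d -> CI (fun z => k * g z)%C a b c d = (k * CI g a b c d)%C.
Proof. intros (G1&G2&G3&G4). unfold CI. rewrite (SI_scal g k (hp c)), (SI_scal g k (hp d)), (SI_scal g k (vp a)), (SI_scal g k (vp b)); auto. ring. Qed.
Lemma CIok_plus g h a b c d : CIok g a b c d -> CIok h a b c d -> CIok (fun z => g z + h z)%C a b c d.
Proof. intros (G1&G2&G3&G4) (H1&H2&H3&H4). split; [|split; [|split]]; apply SIok_plus; auto. Qed.
Lemma CIok_minus g h a b c d : CIok g a b c d -> CIok h a b c d -> CIok (fun z => g z - h z)%C a b c d.
Proof. intros (G1&G2&G3&G4) (H1&H2&H3&H4). split; [|split; [|split]]; apply SIok_minus; auto. Qed.
Lemma CIok_scal g k a b c d : CIok g a b c d -> CIok (fun z => k * g z)%C a b c d.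
Proof. intros (G1&G2&G3&G4). split; [|split; [|split]]; apply SIok_scal; auto. Qed.

Lemma CI_ext g h a b c d : (forall z, onB a b c d z -> g z = h z) -> CI g a b c d = CI h a b c d.
Proof.
  intros H. unfold CI. rewrite (SI_ext g h (hp c)), (SI_ext g h (hp d)), (SI_ext g h (vp a)), (SI_ext g h (vp b)); auto;
  intros t Ht; apply H; [apply onB_v2|apply onB_v1|apply onB_h2|apply onB_h1]; auto.
Qed.

Lemma CIok_ext g h a b c d : (forall z, onB a b c d z -> g z = h z) -> CIok g a b c d -> CIok h a b c d.
Proof.
  intros H (G1&G2&G3&G4). split; [|split; [|split]]; (eapply SIok_ext; [|eassumption]); intros t Ht; apply H;
  [apply onB_h1|apply onB_v2|apply onB_h2|apply onB_v1]; auto.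
Qed.

Lemma Cmod_Ci : Cmod Ci = 1.
Proof. unfold Cmod, Ci. simpl. replace (0 * (0 * 1) + 1 * (1 * 1)) with 1 by ring. apply sqrt_1. Qed.

Lemma CI_bound g a b c d M : a <= b -> c <= d -> CIok g a b c d -> (forall z, onB a b c d z -> Cmod (g z) <= M) ->
  Cmod (CI g a b c d) <= 4 * ((b - a) + (d - c)) * M.
Proof.
  intros Hab Hcd (G1&G2&G3&G4) HM.
  assert (B : forall z, onB a b c d z -> Cmod (g z) <= M) by auto.
  assert (B1 : Cmod (SI g (hp c) a b) <= 2 * (b - a) * M).
  { apply SI_bound; auto. intros t Ht. apply HM. unfold onB, inR, hp; simpl. rewrite ?Rmin_left, ?Rmax_right by lra; try lra. }
  assert (B2 : Cmod (SI g (hp d) a b) <= 2 * (b - a) * M).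
  { apply SI_bound; auto. intros t Ht. apply HM. unfold onB, inR, hp; simpl. rewrite ?Rmin_left, ?Rmax_right by lra; try lra. }
  assert (B3 : Cmod (SI g (vp b) c d) <= 2 * (d - c) * M).
  { apply SI_bound; auto. intros t Ht. apply HM. unfold onB, inR, vp; simpl. rewrite ?Rmin_left, ?Rmax_right by lra; try lra. }
  assert (B4 : Cmod (SI g (vp a) c d) <= 2 * (d - c) * M).
  { apply SI_bound; auto. intros t Ht. apply HM. unfold onB, inR, vp; simpl. rewrite ?Rmin_left, ?Rmax_right by lra; try lra. }
  unfold CI. eapply Rle_trans; [apply Cmod_minus_le|]. rewrite Cmod_mult, Cmod_Ci.
  eapply Rle_trans; [apply Rplus_le_compat_r; apply Cmod_minus_le|].
  eapply Rle_trans; [apply Rplus_le_compat_r; apply Rplus_le_compat_r; apply Cmod_triangle|].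
  rewrite Cmod_mult, Cmod_Ci. lra.
Qed.

Lemma CI_splitx g a m b c d : CIok g a m c d -> CIok g m b c d ->
  CI g a b c d = (CI g a m c d + CI g m b c d)%C.
Proof.
  intros (G1&G2&G3&G4) (H1&H2&H3&H4). unfold CI.
  rewrite <- (SI_Chasles g (hp c) a m b), <- (SI_Chasles g (hp d) a m b); auto. ring.
Qed.
Lemma CI_splity g a b c m d : CIok g a b c m -> CIok g a b m d ->
  CI g a b c d = (CI g a b c m + CI g a b m d)%C.
Proof.
  intros (G1&G2&G3&G4) (H1&H2&H3&H4). unfold CI.
  rewrite <- (SI_Chasles g (vp b) c m d), <- (SI_Chasles g (vp a) c m d); auto. ring.
Qed.

Lemma RInt_lin (al be a b : R) : RInt (fun t => al + be * t) a b = al * (b - a) + be * (b * b - a * a) / 2.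
Proof.
  apply is_RInt_unique.
  replace (al * (b - a) + be * (b * b - a * a) / 2) with
    ((al * b + be * (b * b) / 2) - (al * a + be * (a * a) / 2)) by field.
  apply (is_RInt_derive (fun t => al * t + be * (t * t) / 2)).
  - intros x _. auto_derive; auto. field.
  - intros x _. apply continuity_pt_filterlim. apply continuity_pt_plus.
    + apply continuity_pt_const. intros u v; auto.
    + apply continuity_pt_scal. apply continuity_pt_id.
Qed.

Lemma SI_aff_h A B c a b : SI (fun z => A + B * z)%C (hp c) a b =
  ((fst A - snd B * c) * (b - a) + fst B * (b * b - a * a) / 2,
   (snd A + fst B * c) * (b - a) + snd B * (b * b - a * a) / 2).
Proof.
  unfold SI, hp. f_equal; rewrite <- RInt_lin; apply RInt_ext; intros; simpl; ring.
Qed.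

Lemma SI_aff_v A B x c d : SI (fun z => A + B * z)%C (vp x) c d =
  ((fst A + fst B * x) * (d - c) + (- snd B) * (d * d - c * c) / 2,
   (snd A + snd B * x) * (d - c) + fst B * (d * d - c * c) / 2).
Proof.
  unfold SI, vp. f_equal; rewrite <- RInt_lin; apply RInt_ext; intros; simpl; ring.
Qed.

Lemma CI_aff A B a b c d : CI (fun z => A + B * z)%C a b c d = 0%C.
Proof.
  unfold CI. rewrite !SI_aff_h, !SI_aff_v. unfold Ci, Cmult, Cminus, Cplus, Copp. simpl.
  apply injective_projections; simpl; field.
Qed.

Record rect := mkR { ra : R; rb : R; rc : R; rd : R }.
Definition CIr g (Q : rect) := CI g (ra Q) (rb Q) (rc Q) (rd Q).

Definition q1 Q := mkR (ra Q) ((ra Q + rb Q)/2) (rc Q) ((rc Q + rd Q)/2).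
Definition q2 Q := mkR ((ra Q + rb Q)/2) (rb Q) (rc Q) ((rc Q + rd Q)/2).
Definition q3 Q := mkR (ra Q) ((ra Q + rb Q)/2) ((rc Q + rd Q)/2) (rd Q).
Definition q4 Q := mkR ((ra Q + rb Q)/2) (rb Q) ((rc Q + rd Q)/2) (rd Q).

Definition step g Q :=
  if Rle_dec (Cmod (CIr g Q) / 4) (Cmod (CIr g (q1 Q))) then q1 Q else
  if Rle_dec (Cmod (CIr g Q) / 4) (Cmod (CIr g (q2 Q))) then q2 Q else
  if Rle_dec (Cmod (CIr g Q) / 4) (Cmod (CIr g (q3 Q))) then q3 Q else q4 Q.

Lemma CIok_all g a b c d : (forall z, ccont g z) -> CIok g a b c d.
Proof. intros H. apply CIok_cont. auto. Qed.

Lemma CI_4 g Q : (forall z, ccont g z) ->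
  CIr g Q = (CIr g (q1 Q) + CIr g (q2 Q) + CIr g (q3 Q) + CIr g (q4 Q))%C.
Proof.
  intros H. unfold CIr, q1, q2, q3, q4; simpl.
  rewrite (CI_splity g _ _ _ ((rc Q + rd Q)/2)) by (apply CIok_all; auto).
  rewrite (CI_splitx g _ ((ra Q + rb Q)/2) _ (rc Q)) by (apply CIok_all; auto).
  rewrite (CI_splitx g _ ((ra Q + rb Q)/2) _ ((rc Q + rd Q)/2)) by (apply CIok_all; auto).
  ring.
Qed.

Lemma step_bound g Q : (forall z, ccont g z) -> Cmod (CIr g Q) <= 4 * Cmod (CIr g (step g Q)).
Proof.
  intros H. unfold step.
  destruct (Rle_dec _ _); [lra|]. destruct (Rle_dec _ _); [lra|]. destruct (Rle_dec _ _); [lra|].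
  rewrite (CI_4 g Q H) at 1.
  pose proof (Cmod_triangle (CIr g (q1 Q) + CIr g (q2 Q) + CIr g (q3 Q)) (CIr g (q4 Q))).
  pose proof (Cmod_tri3 (CIr g (q1 Q)) (CIr g (q2 Q)) (CIr g (q3 Q))).
  rewrite (CI_4 g Q H) in n, n0, n1. lra.
Qed.

Lemma step_geom g Q :
  ra Q <= ra (step g Q) /\ rb (step g Q) <= rb Q /\ rc Q <= rc (step g Q) /\ rd (step g Q) <= rd Q
  \/ ~ (ra Q <= rb Q /\ rc Q <= rd Q).
Proof.
  destruct (Rle_dec (ra Q) (rb Q)); [|right; tauto]. destruct (Rle_dec (rc Q) (rd Q)); [|right; tauto].
  left. unfold step, q1, q2, q3, q4.
  repeat destruct (Rle_dec _ _); simpl; lra.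
Qed.

Lemma step_len g Q : rb (step g Q) - ra (step g Q) = (rb Q - ra Q) / 2 /\
   rd (step g Q) - rc (step g Q) = (rd Q - rc Q) / 2.
Proof. unfold step, q1, q2, q3, q4. repeat destruct (Rle_dec _ _); simpl; split; field. Qed.

Lemma step_mono g Q : ra Q <= rb Q -> rc Q <= rd Q ->
  ra Q <= ra (step g Q) /\ rb (step g Q) <= rb Q /\ rc Q <= rc (step g Q) /\ rd (step g Q) <= rd Q.
Proof. intros. unfold step, q1, q2, q3, q4. repeat destruct (Rle_dec _ _); simpl; lra. Qed.

Definition Qn g Q0 n := Nat.iter n (step g) Q0.

Lemma Qn_S g Q0 n : Qn g Q0 (S n) = step g (Qn g Q0 n).
Proof. reflexivity. Qed.

Lemma Qn_len g Q0 n : rb (Qn g Q0 n) - ra (Qn g Q0 n) = (rb Q0 - ra Q0) * (/2)^n /\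
   rd (Qn g Q0 n) - rc (Qn g Q0 n) = (rd Q0 - rc Q0) * (/2)^n.
Proof.
  induction n as [|n IH]; [simpl; split; ring|].
  rewrite Qn_S. destruct (step_len g (Qn g Q0 n)) as [E1 E2]. rewrite E1, E2. destruct IH as [I1 I2].
  rewrite I1, I2. simpl. split; field.
Qed.

Lemma Qn_mono g Q0 n : ra Q0 <= rb Q0 -> rc Q0 <= rd Q0 ->
  ra (Qn g Q0 n) <= ra (Qn g Q0 (S n)) /\ rb (Qn g Q0 (S n)) <= rb (Qn g Q0 n) /\
  rc (Qn g Q0 n) <= rc (Qn g Q0 (S n)) /\ rd (Qn g Q0 (S n)) <= rd (Qn g Q0 n).
Proof.
  intros H1 H2. rewrite Qn_S. apply step_mono.
  - destruct (Qn_len g Q0 n) as [E _]. assert (0 <= (rb Q0 - ra Q0) * (/2)^n).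
    { apply Rmult_le_pos; [lra|]. apply pow_le; lra. } lra.
  - destruct (Qn_len g Q0 n) as [_ E]. assert (0 <= (rd Q0 - rc Q0) * (/2)^n).
    { apply Rmult_le_pos; [lra|]. apply pow_le; lra. } lra.
Qed.

Lemma Qn_bound g Q0 n : (forall z, ccont g z) -> Cmod (CIr g Q0) <= 4 ^ n * Cmod (CIr g (Qn g Q0 n)).
Proof.
  intros H. induction n as [|n IH]; [simpl; lra|].
  rewrite Qn_S. pose proof (step_bound g (Qn g Q0 n) H). simpl.
  assert (0 <= 4 ^ n) by (apply pow_le; lra). nra.
Qed.

Lemma nested_point (u v : nat -> R) :
  (forall n, u n <= u (S n)) -> (forall n, v (S n) <= v n) -> (forall n, u n <= v n) ->
  exists x, forall n, u n <= x <= v n.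
Proof.
  intros Hu Hv Huv.
  assert (Hmu : forall n m, (n <= m)%nat -> u n <= u m).
  { intros n m Hnm. induction Hnm; [lra|]. specialize (Hu m). lra. }
  assert (Hmv : forall n m, (n <= m)%nat -> v m <= v n).
  { intros n m Hnm. induction Hnm; [lra|]. specialize (Hv m). lra. }
  assert (Huv' : forall n m, u n <= v m).
  { intros n m. destruct (Nat.le_ge_cases n m) as [H|H].
    - specialize (Hmu n m H). specialize (Huv m). lra.
    - specialize (Hmv m n H). specialize (Huv n). lra. }
  destruct (completeness (fun x => exists n, x = u n)) as [x [Hub Hlub]].
  - exists (v 0%nat). intros y [n ->]. apply Huv'.
  - exists (u 0%nat). exists 0%nat. auto.
  - exists x. intros n. split.
    + apply Hub. exists n. auto.
    + apply Hlub. intros y [k ->]. apply Huv'.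
Qed.

Lemma goursat g a b c d : a <= b -> c <= d -> (forall z, ccont g z) ->
  (forall z, a <= fst z <= b -> c <= snd z <= d -> exists l, cdiff g z l) -> CI g a b c d = 0%C.
Proof.
  intros Hab Hcd Hc Hd.
  set (Q0 := mkR a b c d).
  assert (M : forall n, ra (Qn g Q0 n) <= ra (Qn g Q0 (S n)) /\ rb (Qn g Q0 (S n)) <= rb (Qn g Q0 n) /\
    rc (Qn g Q0 n) <= rc (Qn g Q0 (S n)) /\ rd (Qn g Q0 (S n)) <= rd (Qn g Q0 n)).
  { intros n. apply Qn_mono; simpl; auto. }
  assert (L : forall n, rb (Qn g Q0 n) - ra (Qn g Q0 n) = (b - a) * (/2)^n /\
      rd (Qn g Q0 n) - rc (Qn g Q0 n) = (d - c) * (/2)^n) by (intros; apply Qn_len).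
  assert (P2 : forall n, 0 <= (/2)^n) by (intros; apply pow_le; lra).
  destruct (nested_point (fun n => ra (Qn g Q0 n)) (fun n => rb (Qn g Q0 n))) as [x Hx].
  { intros n; apply M. } { intros n; apply M. }
  { intros n. destruct (L n) as [L1 _]. specialize (P2 n). nra. }
  destruct (nested_point (fun n => rc (Qn g Q0 n)) (fun n => rd (Qn g Q0 n))) as [y Hy].
  { intros n; apply M. } { intros n; apply M. }
  { intros n. destruct (L n) as [_ L2]. specialize (P2 n). nra. }
  destruct (Hd (x, y)) as [l Hl].
  { simpl. specialize (Hx 0%nat). simpl in Hx. lra. }
  { simpl. specialize (Hy 0%nat). simpl in Hy. lra. }
  apply Cmod_eq_0. apply Rle_antisym; [|apply Cmod_ge_0].
  set (s := (b - a) + (d - c)).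
  assert (Hs : 0 <= s) by (unfold s; lra).
  apply Rnot_lt_le. intro Hpos.
  set (eps := Cmod (CI g a b c d) / (8 * (s * s) + 1)).
  assert (Heps : 0 < eps) by (unfold eps; apply Rdiv_lt_0_compat; [lra|]; nra).
  destruct (Hl eps Heps) as [del [Hdel Hl']].
  destruct (pow_lt_1_zero (/2)) with (y := del / (s + 1)) as [N HN].
  { rewrite Rabs_pos_eq; lra. } { apply Rdiv_lt_0_compat; lra. }
  specialize (HN N (le_n N)). rewrite Rabs_pos_eq in HN by auto.
  set (QN := Qn g Q0 N).
  destruct (L N) as [LN1 LN2]. fold QN in LN1, LN2.
  specialize (Hx N). specialize (Hy N). fold QN in Hx, Hy. simpl in Hx, Hy.
  set (h := (fun z => (g (x, y) - l * (x, y)) + l * z)%C).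
  assert (Hhc : forall z, ccont h z).
  { intros z. apply cdiff_ccont with (0 + l * 1)%C. unfold h. apply cdiff_plus; [apply cdiff_const|].
    apply cdiff_scal, cdiff_id. }
  assert (E : CIr g QN = CIr (fun z => g z - h z)%C QN).
  { unfold CIr. rewrite CI_minus by (apply CIok_all; auto).
    unfold h. rewrite CI_aff. ring. }
  assert (B1 : Cmod (CIr g QN) <= 4 * (s * (/2)^N) * (eps * (s * (/2)^N))).
  { rewrite E. unfold CIr.
    replace (s * (/2)^N) with ((rb QN - ra QN) + (rd QN - rc QN)) by (rewrite LN1, LN2; unfold s; ring).
    apply CI_bound; [nra|nra| |].
    - apply CIok_minus; apply CIok_all; auto.
    - intros z [[Hz1 Hz2] _]. rewrite Rmin_left, Rmax_right in Hz1, Hz2 by nra.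
      assert (Hz : Cmod (z - (x, y)) <= (rb QN - ra QN) + (rd QN - rc QN)).
      { eapply Rle_trans; [apply Cmod_le_sum|]. destruct z as [z1 z2]. simpl in *.
        apply Rplus_le_compat; apply Rabs_le; lra. }
      assert (Hz' : Cmod (z - (x, y)) < del).
      { eapply Rle_lt_trans; [apply Hz|]. rewrite LN1, LN2.
        replace ((b - a) * (/ 2) ^ N + (d - c) * (/ 2) ^ N) with (s * (/2)^N) by (unfold s; ring).
        specialize (P2 N). apply Rle_lt_trans with ((s + 1) * (/2)^N); [nra|].
        replace del with ((s + 1) * (del / (s + 1))) by (field; lra).
        apply Rmult_lt_compat_l; lra. }
      specialize (Hl' z Hz').
      replace (g z - h z)%C with (g z - g (x, y) - l * (z - (x, y)))%C by (unfold h; ring).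
      eapply Rle_trans; [apply Hl'|]. apply Rmult_le_compat_l; lra. }
  pose proof (Qn_bound g Q0 N Hc). fold QN in H. unfold CIr in H at 1. simpl in H.
  assert (Hq : 4 ^ N * ((/ 2) ^ N * (/2) ^ N) = 1).
  { rewrite <- Rpow_mult_distr, <- Rpow_mult_distr. replace (4 * (/ 2 * / 2)) with 1 by field. apply pow1. }
  assert (H4 : 0 <= 4 ^ N) by (apply pow_le; lra).
  assert (Cmod (CI g a b c d) <= 4 * s * s * eps).
  { eapply Rle_trans; [apply H|].
    apply Rle_trans with (4 ^ N * (4 * (s * (/2)^N) * (eps * (s * (/2)^N)))); [apply Rmult_le_compat_l; auto|].
    right. replace (4 ^ N * (4 * (s * (/ 2) ^ N) * (eps * (s * (/ 2) ^ N)))) with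
      (4 * s * s * eps * (4 ^ N * ((/ 2) ^ N * (/2) ^ N))) by ring. rewrite Hq. ring. }
  unfold eps in H0. 
  assert (Cmod (CI g a b c d) / (8 * (s * s) + 1) * (8 * (s * s) + 1) = Cmod (CI g a b c d)) by (field; nra).
  assert (0 <= s * s) by nra. nra.
Qed.

Lemma goursat_pt g (u : C) a b c d : a < fst u < b -> c < snd u < d -> (forall z, ccont g z) ->
  (forall z, z <> u -> exists l, cdiff g z l) -> CI g a b c d = 0%C.
Proof.
  intros Hx Hy Hc Hd.
  assert (Hok : forall a b c d, CIok g a b c d) by (intros; apply CIok_all; auto).
  destruct (Hc u 1 Rlt_0_1) as [d0 [Hd0 Hu]].
  set (K := Cmod (g u) + 1). assert (HK : 0 < K) by (unfold K; pose proof (Cmod_ge_0 (g u)); lra).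
  assert (Main : forall del, 0 < del -> del < d0 / 2 -> fst u - del > a -> fst u + del < b ->
     snd u - del > c -> snd u + del < d -> Cmod (CI g a b c d) <= 16 * del * K).
  { intros del H0 H1 H2 H3 H4 H5.
    rewrite (CI_splitx g a (fst u - del) b) by auto. rewrite (CI_splitx g (fst u - del) (fst u + del) b) by auto.
    rewrite (CI_splity g (fst u - del) (fst u + del) c (snd u - del) d) by auto. rewrite (CI_splity g (fst u - del) (fst u + del) (snd u - del) (snd u + del) d) by auto.
    assert (Z1 : CI g a (fst u - del) c d = 0%C).
    { apply goursat; auto; try lra. intros z Hz1 Hz2. apply Hd. intro E; subst z.  lra. }
    assert (Z2 : CI g (fst u + del) b c d = 0%C).
    { apply goursat; auto; try lra. intros z Hz1 Hz2. apply Hd. intro E; subst z.  lra. }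
    assert (Z3 : CI g (fst u - del) (fst u + del) c (snd u - del) = 0%C).
    { apply goursat; auto; try ( lra). intros z Hz1 Hz2. apply Hd. intro E; subst z.  lra. }
    assert (Z4 : CI g (fst u - del) (fst u + del) (snd u + del) d = 0%C).
    { apply goursat; auto; try ( lra). intros z Hz1 Hz2. apply Hd. intro E; subst z.  lra. }
    rewrite Z1, Z2, Z3, Z4.
    match goal with |- Cmod ?X <= _ => replace X with (CI g (fst u - del) (fst u + del) (snd u - del) (snd u + del)) by ring end.
    eapply Rle_trans; [apply (CI_bound g (fst u - del) (fst u + del) (snd u - del) (snd u + del) K); auto;  try lra|].
    - intros z [[Hz1 Hz2] _]. rewrite Rmin_left, Rmax_right in Hz1, Hz2 by ( lra).
      assert (Cmod (z - u) < d0).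
      { eapply Rle_lt_trans; [apply Cmod_le_sum|]. destruct z as [z1 z2]; destruct u as [u1 u2].
         simpl in *.
        assert (Rabs (z1 + - u1) <= del) by (apply Rabs_le; lra).
        assert (Rabs (z2 + - u2) <= del) by (apply Rabs_le; lra). lra. }
      specialize (Hu z H). unfold K.
      replace (g z) with ((g z - g u) + g u)%C by ring. eapply Rle_trans; [apply Cmod_triangle|]. lra.
    -  lra. }
  apply Cmod_eq_0. apply Rle_antisym; [|apply Cmod_ge_0]. apply Rnot_lt_le. intro Hpos.
  set (m := Rmin (Rmin (d0 / 4) (Cmod (CI g a b c d) / (32 * K)))
                 (Rmin (Rmin (fst u - a) (b - fst u)) (Rmin (snd u - c) (d - snd u))) / 2).
  assert (Hm1 : 0 < m).
  { unfold m. apply Rdiv_lt_0_compat; [|lra]. repeat apply Rmin_glb_lt; try lra.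
    apply Rdiv_lt_0_compat; lra. }
  assert (Hm2 : m <= Rmin (d0 / 4) (Cmod (CI g a b c d) / (32 * K)) / 2).
  { unfold m. apply Rmult_le_compat_r; [lra|]. apply Rmin_l. }
  assert (Hm3 : m <= (Rmin (Rmin (fst u - a) (b - fst u)) (Rmin (snd u - c) (d - snd u))) / 2).
  { unfold m. apply Rmult_le_compat_r; [lra|]. apply Rmin_r. }
  pose proof (Rmin_l (d0/4) (Cmod (CI g a b c d) / (32 * K))).
  pose proof (Rmin_r (d0/4) (Cmod (CI g a b c d) / (32 * K))).
  pose proof (Rmin_l (Rmin (fst u - a) (b - fst u)) (Rmin (snd u - c) (d - snd u))).
  pose proof (Rmin_r (Rmin (fst u - a) (b - fst u)) (Rmin (snd u - c) (d - snd u))).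
  pose proof (Rmin_l (fst u - a) (b - fst u)). pose proof (Rmin_r (fst u - a) (b - fst u)).
  pose proof (Rmin_l (snd u - c) (d - snd u)). pose proof (Rmin_r (snd u - c) (d - snd u)).
  specialize (Main m Hm1 ltac:(lra) ltac:(lra) ltac:(lra) ltac:(lra) ltac:(lra)).
  assert (E : Cmod (CI g a b c d) / (32 * K) * (32 * K) = Cmod (CI g a b c d)) by (field; lra).
  nra.
Qed.

Definition Dv (g : C -> C) (z : C) := exists l, cdiff g z l.

Lemma Dv_ccont g z : Dv g z -> ccont g z.
Proof. intros [l H]. eapply cdiff_ccont; eauto. Qed.

Lemma cdiff_comp g h z lg lh : cdiff h z lh -> cdiff g (h z) lg -> cdiff (fun y => g (h y)) z (lg * lh)%C.
Proof.
  intros Hh Hg e He.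
  set (Lh := Cmod lh + 1). set (Lg := Cmod lg + 1).
  assert (HLh : 0 < Lh) by (unfold Lh; pose proof (Cmod_ge_0 lh); lra).
  assert (HLg : 0 < Lg) by (unfold Lg; pose proof (Cmod_ge_0 lg); lra).
  set (e1 := e / (2 * Lh)). set (e2 := Rmin 1 (e / (2 * Lg))).
  assert (He1 : 0 < e1) by (unfold e1; apply Rdiv_lt_0_compat; lra).
  assert (He2 : 0 < e2) by (unfold e2; apply Rmin_glb_lt; [lra|apply Rdiv_lt_0_compat; lra]).
  destruct (Hg e1 He1) as [dg [Hdg Hg']].
  destruct (Hh e2 He2) as [dh [Hdh Hh']].
  exists (Rmin dh (dg / Lh)). split; [apply Rmin_glb_lt; auto; apply Rdiv_lt_0_compat; lra|].
  intros y Hy.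
  assert (Hy1 : Cmod (y - z) < dh) by (eapply Rlt_le_trans; [apply Hy|apply Rmin_l]).
  assert (Hy2 : Cmod (y - z) < dg / Lh) by (eapply Rlt_le_trans; [apply Hy|apply Rmin_r]).
  specialize (Hh' y Hy1).
  pose proof (Cmod_ge_0 (y - z)) as Hm0.
  assert (E2 : e2 <= 1) by apply Rmin_l. assert (E2' : e2 <= e / (2 * Lg)) by apply Rmin_r.
  assert (Hhy : Cmod (h y - h z) <= Lh * Cmod (y - z)).
  { replace (h y - h z)%C with ((h y - h z - lh * (y - z)) + lh * (y - z))%C by ring.
    eapply Rle_trans; [apply Cmod_triangle|]. rewrite Cmod_mult. unfold Lh. nra. }
  assert (Hhy' : Cmod (h y - h z) < dg).
  { eapply Rle_lt_trans; [apply Hhy|].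
    replace dg with (Lh * (dg / Lh)) by (field; lra). apply Rmult_lt_compat_l; auto. }
  specialize (Hg' (h y) Hhy').
  replace (g (h y) - g (h z) - lg * lh * (y - z))%C with
    ((g (h y) - g (h z) - lg * (h y - h z)) + lg * (h y - h z - lh * (y - z)))%C by ring.
  eapply Rle_trans; [apply Cmod_triangle|]. rewrite Cmod_mult.
  assert (T1 : e1 * Cmod (h y - h z) <= e / 2 * Cmod (y - z)).
  { apply Rle_trans with (e1 * (Lh * Cmod (y - z))). { apply Rmult_le_compat_l; lra. }
    right. unfold e1. field. lra. }
  assert (T2 : Cmod lg * Cmod (h y - h z - lh * (y - z)) <= e / 2 * Cmod (y - z)).
  { apply Rle_trans with (Lg * (e2 * Cmod (y - z))).
    { apply Rmult_le_compat; auto using Cmod_ge_0. unfold Lg; lra. }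
    apply Rle_trans with (Lg * (e / (2 * Lg) * Cmod (y - z))).
    { apply Rmult_le_compat_l; [lra|]. apply Rmult_le_compat_r; auto. }
    right. field. lra. }
  lra.
Qed.

Lemma Dv_const c z : Dv (fun _ => c) z.
Proof. exists 0%C. apply cdiff_const. Qed.
Lemma Dv_id z : Dv (fun y => y) z.
Proof. exists 1%C. apply cdiff_id. Qed.
Lemma Dv_plus g h z : Dv g z -> Dv h z -> Dv (fun y => g y + h y)%C z.
Proof. intros [l1 H1] [l2 H2]. eexists. apply cdiff_plus; eauto. Qed.
Lemma Dv_mult g h z : Dv g z -> Dv h z -> Dv (fun y => g y * h y)%C z.
Proof. intros [l1 H1] [l2 H2]. eexists. apply cdiff_mult; eauto. Qed.
Lemma Dv_ext g h z : (forall y, g y = h y) -> Dv g z -> Dv h z.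
Proof. intros E [l H]. exists l. intros e He. destruct (H e He) as [d [Hd H']]. exists d. split; auto.
  intros y Hy. rewrite <- !E. auto. Qed.
Lemma Dv_minus g h z : Dv g z -> Dv h z -> Dv (fun y => g y - h y)%C z.
Proof. intros Hg Hh. apply (Dv_ext (fun y => g y + (-1) * h y)%C); [intros; ring|].
  apply Dv_plus; auto. apply Dv_mult; auto. apply Dv_const. Qed.
Lemma Dv_inv h z : Dv h z -> h z <> 0%C -> Dv (fun y => / h y)%C z.
Proof. intros [l H] Hz. eexists. apply (cdiff_comp Cinv h z); eauto. apply cdiff_inv; auto. Qed.
Lemma Dv_pow g n z : Dv g z -> Dv (fun y => g y ^ n)%C z.
Proof. intros H. induction n as [|n IH].
  - apply (Dv_ext (fun _ => 1%C)); [intros; simpl; auto|apply Dv_const].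
  - apply (Dv_ext (fun y => g y * g y ^ n)%C); [intros; simpl; auto|apply Dv_mult; auto]. Qed.

Lemma cdiff_local g h z l r : 0 < r -> (forall y, Cmod (y - z) < r -> g y = h y) -> cdiff h z l -> cdiff g z l.
Proof.
  intros Hr E H e He. destruct (H e He) as [d [Hd H']]. exists (Rmin d r). split; [apply Rmin_glb_lt; auto|].
  intros y Hy.
  assert (Hy1 : Cmod (y - z) < d) by (eapply Rlt_le_trans; [apply Hy|apply Rmin_l]).
  assert (Hy2 : Cmod (y - z) < r) by (eapply Rlt_le_trans; [apply Hy|apply Rmin_r]).
  assert (Hz : Cmod (z - z) < r) by (replace (z - z)%C with (RtoC 0) by ring; rewrite Cmod_0; auto).
  rewrite (E y Hy2), (E z Hz). apply H'; auto.
Qed.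

Lemma seg_bound g p a b : a <= b -> lip1 p -> (forall t, a <= t <= b -> ccont g (p t)) ->
  exists M, 0 <= M /\ forall t, a <= t <= b -> Cmod (g (p t)) <= M.
Proof.
  intros Hab Hp Hc.
  destruct (continuity_ab_maj (fun t => Cmod (g (p t))) a b Hab) as [x [Hx _]].
  - intros t Ht. intros e He. destruct (Hc t Ht e He) as [d [Hd H]]. exists d. split; auto.
    intros y [_ Hy]. unfold R_dist in *. simpl in *. unfold R_dist in Hy.
    assert (Cmod (p y - p t) < d) by (eapply Rle_lt_trans; [apply Hp|apply Hy]).
    specialize (H _ H0). pose proof (Cmod_rev_tri (g (p y)) (g (p t))).
    pose proof (Cmod_rev_tri (g (p t)) (g (p y))). rewrite Cmod_minus_sym in H2.
    apply Rabs_def1; lra.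
  - exists (Cmod (g (p x))). split; [apply Cmod_ge_0|]. auto.
Qed.

Lemma CI_bound_exists g a b c d : a <= b -> c <= d -> (forall z, onB a b c d z -> ccont g z) ->
  exists M, 0 <= M /\ forall z, onB a b c d z -> Cmod (g z) <= M.
Proof.
  intros Hab Hcd Hc.
  destruct (seg_bound g (hp c) a b) as [M1 [P1 H1]]; auto using lip1_hp.
  { intros t Ht. apply Hc, onB_h1. rewrite Rmin_left, Rmax_right; lra. }
  destruct (seg_bound g (hp d) a b) as [M2 [P2 H2]]; auto using lip1_hp.
  { intros t Ht. apply Hc, onB_h2. rewrite Rmin_left, Rmax_right; lra. }
  destruct (seg_bound g (vp a) c d) as [M3 [P3 H3]]; auto using lip1_vp.
  { intros t Ht. apply Hc, onB_v1. rewrite Rmin_left, Rmax_right; lra. }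
  destruct (seg_bound g (vp b) c d) as [M4 [P4 H4]]; auto using lip1_vp.
  { intros t Ht. apply Hc, onB_v2. rewrite Rmin_left, Rmax_right; lra. }
  exists (M1 + M2 + M3 + M4). split; [lra|].
  intros [x y] [[Hx Hy] Hb]. simpl in *. rewrite Rmin_left, Rmax_right in Hx, Hy by lra.
  destruct Hb as [E|[E|[E|E]]]; subst.
  - specialize (H3 y Hy). unfold vp in H3. lra.
  - specialize (H4 y Hy). unfold vp in H4. lra.
  - specialize (H1 x Hx). unfold hp in H1. lra.
  - specialize (H2 x Hx). unfold hp in H2. lra.
Qed.

Definition ceq_dec (z u : C) : {z = u} + {z <> u}.
Proof.
  destruct z as [z1 z2], u as [u1 u2].
  destruct (Req_EM_T z1 u1) as [E1|N1]; [destruct (Req_EM_T z2 u2) as [E2|N2]|].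
  - left; subst; auto.
  - right; intro E; inversion E; auto.
  - right; intro E; inversion E; auto.
Defined.

Definition gq (f : C -> C) (L u : C) (z : C) : C :=
  if ceq_dec z u then L else ((f z - f u) * / (z - u))%C.

Lemma Cminus_neq0 (z u : C) : z <> u -> (z - u)%C <> 0%C.
Proof. intros H E. apply H. replace z with ((z - u) + u)%C by ring. rewrite E. ring. Qed.

Lemma Cmod_minus_pos (z u : C) : z <> u -> 0 < Cmod (z - u).
Proof. intros H. apply Cmod_gt_0. apply Cminus_neq0; auto. Qed.

Lemma gq_Dv f L u z : (forall y, Dv f y) -> z <> u -> Dv (gq f L u) z.
Proof.
  intros Hf Hz.
  assert (HD : Dv (fun y => (f y - f u) * / (y - u))%C z).
  { apply Dv_mult. apply Dv_minus; auto. apply Dv_const.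
    apply Dv_inv. apply Dv_minus; [apply Dv_id|apply Dv_const]. apply Cminus_neq0; auto. }
  destruct HD as [l Hl]. exists l. apply (cdiff_local _ (fun y => ((f y - f u) * / (y - u))%C) z l (Cmod (z - u))); auto.
  - apply Cmod_minus_pos; auto.
  - intros y Hy. unfold gq. destruct (ceq_dec y u) as [E|_]; auto.
    subst y. rewrite Cmod_minus_sym in Hy. lra.
Qed.

Lemma gq_cont f L u z : (forall y, Dv f y) -> cdiff f u L -> ccont (gq f L u) z.
Proof.
  intros Hf HL. destruct (ceq_dec z u) as [E|N].
  - subst z. intros e He. destruct (HL (e/2)) as [d [Hd H]]; [lra|]. exists d. split; auto.
    intros y Hy. assert (Eu : gq f L u u = L) by (unfold gq; destruct (ceq_dec u u); congruence).
    rewrite Eu. unfold gq. destruct (ceq_dec y u) as [E|N].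
    + replace (L - L)%C with (RtoC 0) by ring. rewrite Cmod_0. auto.
    + specialize (H y Hy).
      assert (Hp : 0 < Cmod (y - u)) by (apply Cmod_minus_pos; auto).
      replace ((f y - f u) * / (y - u) - L)%C with ((f y - f u - L * (y - u)) * / (y - u))%C
        by (field; apply Cminus_neq0; auto).
      rewrite Cmod_mult, Cmod_inv by (apply Cminus_neq0; auto).
      apply Rle_lt_trans with (e / 2 * Cmod (y - u) * / Cmod (y - u)).
      { apply Rmult_le_compat_r; auto. left; apply Rinv_0_lt_compat; auto. }
      replace (e / 2 * Cmod (y - u) * / Cmod (y - u)) with (e / 2) by (field; lra). lra.
  - apply Dv_ccont. apply gq_Dv; auto.
Qed.

Lemma CIF_zero f L u a b c d : (forall y, Dv f y) -> cdiff f u L ->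
  a < fst u < b -> c < snd u < d -> CI (gq f L u) a b c d = 0%C.
Proof.
  intros Hf HL Hx Hy. apply (goursat_pt _ u); auto.
  - intros z. apply gq_cont; auto.
  - intros z Hz. apply gq_Dv; auto.
Qed.

Lemma key_ineq (X A : R) : 0 < A -> Rabs X <= A -> 1/(2*A) <= A / (X * (X * 1) + A * (A * 1)).
Proof.
  intros HA HX. assert (X * X <= A * A).
  { unfold Rabs in HX. destruct (Rcase_abs X); nra. }
  apply Rle_trans with (A / (A * A + A * A)).
  { right. assert (0 < A * A) by nra. field. lra. }
  unfold Rdiv. apply Rmult_le_compat_l; [lra|]. apply Rinv_le_contravar.
  - assert (0 <= X * X) by apply Rle_0_sqr. nra.
  - nra.
Qed.

Lemma pw_bottom t c wx wy A : 0 < A -> c = wy - A -> Rabs (t - wx) <= A ->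
  1/(2*A) <= snd (/ ((t, c) - (wx, wy)))%C.
Proof.
  intros HA Hc Ht. unfold Cinv, Cminus, Cplus, Copp. simpl.
  replace (c + - wy) with (-A) by lra. replace (t + - wx) with (t - wx) by ring.
  replace (- - A) with A by ring. replace (- A * (- A * 1)) with (A * (A * 1)) by ring.
  apply key_ineq; auto.
Qed.

Lemma pw_top t d wx wy A : 0 < A -> d = wy + A -> Rabs (t - wx) <= A ->
  snd (/ ((t, d) - (wx, wy)))%C <= - (1/(2*A)).
Proof.
  intros HA Hd Ht. unfold Cinv, Cminus, Cplus, Copp. simpl.
  replace (d + - wy) with A by lra. replace (t + - wx) with (t - wx) by ring.
  pose proof (key_ineq (t - wx) A HA Ht). unfold Rdiv in *. lra.
Qed.

Lemma pw_right s b wx wy A : 0 < A -> b = wx + A -> Rabs (s - wy) <= A ->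
  1/(2*A) <= fst (/ ((b, s) - (wx, wy)))%C.
Proof.
  intros HA Hb Hs. unfold Cinv, Cminus, Cplus, Copp. simpl.
  replace (b + - wx) with A by lra. replace (s + - wy) with (s - wy) by ring.
  rewrite Rplus_comm. apply key_ineq; auto.
Qed.

Lemma pw_left s a wx wy A : 0 < A -> a = wx - A -> Rabs (s - wy) <= A ->
  fst (/ ((a, s) - (wx, wy)))%C <= - (1/(2*A)).
Proof.
  intros HA Ha Hs. unfold Cinv, Cminus, Cplus, Copp. simpl.
  replace (a + - wx) with (-A) by lra. replace (s + - wy) with (s - wy) by ring.
  replace (- A * (- A * 1)) with (A * (A * 1)) by ring. rewrite Rplus_comm.
  pose proof (key_ineq (s - wy) A HA Hs). unfold Rdiv in *. lra.
Qed.

Lemma snd_CI g a b c d : snd (CI g a b c d) =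
  snd (SI g (hp c) a b) + fst (SI g (vp b) c d) - snd (SI g (hp d) a b) - fst (SI g (vp a) c d).
Proof. unfold CI, Ci, Cmult, Cminus, Cplus, Copp. simpl. ring. Qed.

Lemma RInt_lower f a b m : a <= b -> ex_RInt f a b -> (forall t, a < t < b -> m <= f t) -> (b - a) * m <= RInt f a b.
Proof.
  intros Hab Hf H. assert (E : RInt (fun _ : R => m) a b = (b - a) * m) by (rewrite RInt_const; reflexivity). rewrite <- E.
  apply RInt_le; auto. apply ex_RInt_const.
Qed.

Lemma RInt_upper f a b m : a <= b -> ex_RInt f a b -> (forall t, a < t < b -> f t <= m) -> RInt f a b <= (b - a) * m.
Proof.
  intros Hab Hf H. assert (E : RInt (fun _ : R => m) a b = (b - a) * m) by (rewrite RInt_const; reflexivity). rewrite <- E.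
  apply RInt_le; auto. apply ex_RInt_const.
Qed.

Lemma Kw_pos (wx wy A : R) : 0 < A ->
  0 < snd (CI (fun z => / (z - (wx, wy)))%C (wx - A) (wx + A) (wy - A) (wy + A)).
Proof.
  intros HA.
  assert (Hok : CIok (fun z => / (z - (wx, wy)))%C (wx - A) (wx + A) (wy - A) (wy + A)).
  { apply CIok_cont. intros z Hz. apply Dv_ccont. apply Dv_inv.
    - apply Dv_minus; [apply Dv_id|apply Dv_const].
    - apply Cminus_neq0. intro E. subst z. destruct Hz as [_ H]. simpl in H. lra. }
  destruct Hok as (G1 & G2 & G3 & G4).
  rewrite snd_CI. unfold SI.
  set (a := wx - A) in *. set (b := wx + A) in *. set (c := wy - A) in *. set (d := wy + A) in *.
  cbn [fst snd].
  assert (I1 : (b - a) * (1/(2*A)) <= RInt (fun t => snd (/ (hp c t - (wx, wy)))%C) a b).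
  { apply RInt_lower; [unfold a, b; lra|apply G1|]. intros t Ht. unfold hp.
    apply pw_bottom; auto. apply Rabs_le. unfold a, b in Ht. lra. }
  assert (I2 : (d - c) * (1/(2*A)) <= RInt (fun t => fst (/ (vp b t - (wx, wy)))%C) c d).
  { apply RInt_lower; [unfold c, d; lra|apply G2|]. intros t Ht. unfold vp.
    apply pw_right; auto. apply Rabs_le. unfold c, d in Ht. lra. }
  assert (I3 : RInt (fun t => snd (/ (hp d t - (wx, wy)))%C) a b <= (b - a) * (- (1/(2*A)))).
  { apply RInt_upper; [unfold a, b; lra|apply G3|]. intros t Ht. unfold hp.
    apply pw_top; auto. apply Rabs_le. unfold a, b in Ht. lra. }
  assert (I4 : RInt (fun t => fst (/ (vp a t - (wx, wy)))%C) c d <= (d - c) * (- (1/(2*A)))).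
  { apply RInt_upper; [unfold c, d; lra|apply G4|]. intros t Ht. unfold vp.
    apply pw_left; auto. apply Rabs_le. unfold c, d in Ht. lra. }
  assert (0 < (b - a) * (1/(2*A))) by (unfold a, b; apply Rmult_lt_0_compat; [lra|apply Rdiv_lt_0_compat; lra]).
  assert ((d - c) = (b - a)) by (unfold a, b, c, d; ring).
  rewrite H0 in I2, I4. lra.
Qed.

Lemma Cmod_real_diff (t wx : R) : Cmod ((t, 0) - (wx, 0))%C = Rabs (t - wx).
Proof. apply Cmod_pair_x. Qed.

Lemma Cmult_eq0_l (x y : C) : x <> 0%C -> (x * y)%C = 0%C -> y = 0%C.
Proof. intros Hx E. replace y with (/ x * (x * y))%C by (field; auto). rewrite E. ring. Qed.

Lemma identity_R (f : C -> C) : (forall z, Dv f z) -> (forall x : R, f (x, 0) = 0%C) -> forall w, f w = 0%C.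
Proof.
  intros Hf H0 [wx wy].
  set (A := 2 * Rabs wy + 2). set (Dd := Rabs wy + 2).
  assert (HA : 0 < A) by (unfold A; pose proof (Rabs_pos wy); lra).
  assert (HDd : 0 < Dd) by (unfold Dd; pose proof (Rabs_pos wy); lra).
  assert (HAD : Dd + Rabs wy = A) by (unfold A, Dd; ring).
  set (a := wx - A). set (b := wx + A). set (c := wy - A). set (d := wy + A).
  set (w0 := (wx, 0) : C).
  assert (Hbd : forall z, onB a b c d z -> Dd <= Cmod (z - w0)).
  { intros [z1 z2] [[Hz1 Hz2] Hb]. simpl in *. unfold w0.
    pose proof (Rabs_pos wy). pose proof (Rabs_pos (z2 - 0)).
    destruct Hb as [E|[E|[E|E]]]; subst.
    - eapply Rle_trans; [|apply (re_le_Cmod ((a, z2) - (wx, 0))%C)]. simpl.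
      unfold a. replace (wx - A + - wx) with (-A) by ring. rewrite Rabs_Ropp, Rabs_pos_eq; lra.
    - eapply Rle_trans; [|apply (re_le_Cmod ((b, z2) - (wx, 0))%C)]. simpl.
      unfold b. replace (wx + A + - wx) with A by ring. rewrite Rabs_pos_eq; lra.
    - eapply Rle_trans; [|apply (im_le_Cmod ((z1, c) - (wx, 0))%C)]. simpl.
      unfold c. replace (wy - A + - 0) with (wy - A) by ring.
      unfold Rabs at 1. destruct (Rcase_abs (wy - A)); unfold Rabs in *; destruct (Rcase_abs wy); lra.
    - eapply Rle_trans; [|apply (im_le_Cmod ((z1, d) - (wx, 0))%C)]. simpl.
      unfold d. replace (wy + A + - 0) with (wy + A) by ring.
      unfold Rabs at 1. destruct (Rcase_abs (wy + A)); unfold Rabs in *; destruct (Rcase_abs wy); lra. }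
  assert (Hneq : forall z u, onB a b c d z -> Cmod (u - w0) < Dd -> Dd - Cmod (u - w0) <= Cmod (z - u)).
  { intros z u Hz Hu. specialize (Hbd z Hz).
    pose proof (Cmod_rev_tri (z - w0) (u - w0)).
    replace (z - w0 - (u - w0))%C with (z - u)%C in H by ring. lra. }
  assert (Hneq' : forall z u, onB a b c d z -> Cmod (u - w0) < Dd -> z <> u).
  { intros z u Hz Hu E. subst. specialize (Hneq u u Hz Hu).
    replace (u - u)%C with (RtoC 0) in Hneq by ring. rewrite Cmod_0 in Hneq. lra. }
  assert (Hneq0 : forall z, onB a b c d z -> z <> w0).
  { intros z Hz. apply Hneq'; auto. replace (w0 - w0)%C with (RtoC 0) by ring. rewrite Cmod_0. auto. }
  set (Jf := fun (n : nat) (u : C) (z : C) => (f z * / ((z - w0) ^ n * (z - u)))%C).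
  set (J := fun n u => CI (Jf n u) a b c d).
  assert (HJok : forall n u, Cmod (u - w0) < Dd -> CIok (Jf n u) a b c d).
  { intros n u Hu. apply CIok_cont. intros z Hz. apply Dv_ccont. unfold Jf.
    apply Dv_mult; auto. apply Dv_inv.
    - apply Dv_mult; [apply Dv_pow|]; apply Dv_minus; try apply Dv_id; apply Dv_const.
    - apply Cmult_neq_0. apply Cpow_nz. apply Cminus_neq0; auto. apply Cminus_neq0; auto. }
  destruct (CI_bound_exists f a b c d) as [M [HM0 HM]]; try (unfold a, b, c, d; lra).
  { intros z _. apply Dv_ccont; auto. }
  assert (HJb : forall n u, Cmod (u - w0) < Dd ->
     Cmod (J n u) <= 4 * ((b - a) + (d - c)) * (M * / (Dd ^ n * (Dd - Cmod (u - w0))))).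
  { intros n u Hu. unfold J. apply CI_bound; try (unfold a, b, c, d; lra); auto.
    intros z Hz. unfold Jf. specialize (Hbd z Hz). specialize (Hneq z u Hz Hu).
    rewrite Cmod_mult, Cmod_inv. 2:{ apply Cmult_neq_0. apply Cpow_nz. apply Cminus_neq0; auto. apply Cminus_neq0; auto. }
    rewrite Cmod_mult, Cmod_pow. apply Rmult_le_compat; auto using Cmod_ge_0.
    - left. apply Rinv_0_lt_compat. apply Rmult_lt_0_compat; [apply pow_lt|]; lra.
    - apply Rinv_le_contravar. apply Rmult_lt_0_compat; [apply pow_lt; auto|lra].
      apply Rmult_le_compat; try lra. apply pow_le; lra. apply pow_incr. lra. }
  assert (Hw0 : Cmod (w0 - w0) < Dd) by (replace (w0 - w0)%C with (RtoC 0) by ring; rewrite Cmod_0; auto).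
  assert (HJrec : forall n u, Cmod (u - w0) < Dd -> J n u = (J n w0 + (u - w0) * J (S n) u)%C).
  { intros n u Hu. unfold J.
    rewrite (CI_ext (Jf n u) (fun z => Jf n w0 z + (u - w0) * Jf (S n) u z)%C).
    - rewrite (CI_plus (Jf n w0) (fun z => (u - w0) * Jf (S n) u z)%C); [|apply HJok; auto|apply CIok_scal, HJok; auto].
      rewrite (CI_scal (Jf (S n) u) (u - w0)%C); auto.
    - intros z Hz. unfold Jf. simpl.
      assert (N1 : (z - w0)%C <> 0%C) by (apply Cminus_neq0; auto).
      assert (N2 : (z - u)%C <> 0%C) by (apply Cminus_neq0; apply Hneq'; auto).
      assert (N3 : ((z - w0) ^ n)%C <> 0%C) by (apply Cpow_nz; auto).
      set (P := ((z - w0) ^ n)%C) in *. field. auto. }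
  assert (Hsmall : forall t, Rabs (t - wx) < Dd / 2 -> Cmod ((t, 0) - w0)%C < Dd).
  { intros t Ht. unfold w0. rewrite Cmod_real_diff. lra. }
  assert (Hin : forall t, Rabs (t - wx) < Dd / 2 -> a < t < b /\ c < 0 < d).
  { intros t Ht. pose proof (Rabs_pos wy). apply Rabs_def2 in Ht.
    unfold a, b, c, d. unfold Rabs in *. destruct (Rcase_abs wy); split; split; lra. }
  assert (Base : forall t, Rabs (t - wx) < Dd / 2 -> J 0%nat (t, 0) = 0%C).
  { intros t Ht. destruct (Hf (t, 0)) as [L HL]. destruct (Hin t Ht) as [[I1 I2] [I3 I4]].
    unfold J. rewrite (CI_ext _ (gq f L (t, 0))).
    - apply CIF_zero; auto.
    - intros z Hz. unfold gq, Jf. destruct (ceq_dec z (t, 0)) as [E|NE].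
      + exfalso. apply (Hneq' z (t, 0)); auto.
      + rewrite H0. simpl. replace (1 * (z - (t, 0)))%C with (z - (t, 0))%C by ring. ring. }
  assert (Step : forall n, (forall t, 0 < Rabs (t - wx) < Dd / 2 -> J n (t, 0) = 0%C) ->
     J n w0 = 0%C /\ (forall t, 0 < Rabs (t - wx) < Dd / 2 -> J (S n) (t, 0) = 0%C)).
  { intros n Hn.
    set (K1 := 4 * ((b - a) + (d - c)) * (M * / (Dd ^ (S n) * (Dd / 2)))).
    assert (HK1 : 0 <= K1).
    { unfold K1. apply Rmult_le_pos; [unfold a, b, c, d; lra|]. apply Rmult_le_pos; auto.
      left. apply Rinv_0_lt_compat. apply Rmult_lt_0_compat; [apply pow_lt|]; lra. }
    assert (HJS : forall t, Rabs (t - wx) < Dd / 2 -> Cmod (J (S n) (t, 0)) <= K1).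
    { intros t Ht. eapply Rle_trans; [apply HJb; auto|]. unfold K1.
      apply Rmult_le_compat_l; [unfold a, b, c, d; lra|]. apply Rmult_le_compat_l; auto.
      apply Rinv_le_contravar. apply Rmult_lt_0_compat; [apply pow_lt|]; lra.
      apply Rmult_le_compat_l; [apply pow_le; lra|]. unfold w0. rewrite Cmod_real_diff. lra. }
    assert (Hc : forall t, 0 < Rabs (t - wx) < Dd / 2 -> Cmod (J n w0) <= Rabs (t - wx) * K1).
    { intros t Ht. specialize (Hn t Ht). rewrite HJrec in Hn by (apply Hsmall; lra).
      replace (J n w0) with (- (((t, 0) - w0) * J (S n) (t, 0)))%C.
      2:{ replace (J n w0) with ((J n w0 + ((t, 0) - w0) * J (S n) (t, 0)) - ((t, 0) - w0) * J (S n) (t, 0))%C by ring. rewrite Hn. ring. }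
      rewrite Cmod_opp, Cmod_mult. unfold w0 at 1. rewrite Cmod_real_diff.
      apply Rmult_le_compat_l; [apply Rabs_pos|]. apply HJS. lra. }
    assert (Hz : J n w0 = 0%C).
    { apply Cmod_eq_0. apply Rle_antisym; [|apply Cmod_ge_0]. apply Rnot_lt_le. intro Hp.
      set (m := Rmin (Dd / 4) (Cmod (J n w0) / (2 * (K1 + 1)))).
      assert (Hm : 0 < m) by (unfold m; apply Rmin_glb_lt; [lra|apply Rdiv_lt_0_compat; lra]).
      assert (Hm1 : m <= Dd / 4) by apply Rmin_l.
      assert (Hm2 : m <= Cmod (J n w0) / (2 * (K1 + 1))) by apply Rmin_r.
      specialize (Hc (wx + m)). replace (wx + m - wx) with m in Hc by ring.
      rewrite Rabs_pos_eq in Hc by lra. specialize (Hc ltac:(lra)).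
      assert (E : Cmod (J n w0) / (2 * (K1 + 1)) * (2 * (K1 + 1)) = Cmod (J n w0)) by (field; lra).
      nra. }
    split; auto.
    intros t Ht. specialize (Hn t Ht). rewrite HJrec in Hn by (apply Hsmall; lra).
    rewrite Hz in Hn. apply (Cmult_eq0_l ((t, 0) - w0)%C).
    - intro E. apply (f_equal Cmod) in E. unfold w0 in E. rewrite Cmod_real_diff, Cmod_0 in E. lra.
    - transitivity (0 + ((t, 0) - w0) * J (S n) (t, 0))%C; [ring|exact Hn]. }
  assert (Allc : forall n, (forall t, 0 < Rabs (t - wx) < Dd / 2 -> J n (t, 0) = 0%C) /\ J n w0 = 0%C).
  { induction n as [|n IH].
    - assert (B0 : forall t, 0 < Rabs (t - wx) < Dd / 2 -> J 0%nat (t, 0) = 0%C) by (intros t Ht; apply Base; lra).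
      split; [exact B0|]. destruct (Step 0%nat B0) as [X _]. exact X.
    - destruct IH as [IH1 IH2]. destruct (Step n IH1) as [_ S2]. split; [exact S2|].
      destruct (Step (S n) S2) as [X _]. exact X. }
  set (w := (wx, wy) : C).
  assert (Hww : Cmod (w - w0) = Rabs wy).
  { unfold w, w0. unfold Cmod, Cminus, Cplus, Copp. simpl. rewrite <- sqrt_Rsqr_abs. f_equal. unfold Rsqr. ring. }
  assert (Hwin : Cmod (w - w0) < Dd) by (rewrite Hww; unfold Dd; lra).
  assert (Hpow : forall N, J 0%nat w = ((w - w0) ^ N * J N w)%C).
  { induction N as [|N IH]; [simpl; ring|]. rewrite IH, (HJrec N w Hwin). destruct (Allc N) as [_ E]. rewrite E.
    simpl. ring. }
  assert (HJ0 : J 0%nat w = 0%C).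
  { apply Cmod_eq_0. apply Rle_antisym; [|apply Cmod_ge_0]. apply Rnot_lt_le. intro Hp.
    set (K := 4 * ((b - a) + (d - c)) * (M * / 2)).
    assert (HK : 0 <= K) by (unfold K; apply Rmult_le_pos; [unfold a, b, c, d; lra|]; apply Rmult_le_pos; lra).
    destruct (pow_lt_1_zero (Rabs wy / Dd)) with (y := Cmod (J 0%nat w) / (K + 1)) as [N HN].
    { rewrite Rabs_pos_eq. apply Rmult_lt_reg_r with Dd; auto. unfold Rdiv. rewrite Rmult_assoc, Rinv_l; lra.
      apply Rdiv_le_0_compat; auto using Rabs_pos. }
    { apply Rdiv_lt_0_compat; lra. }
    specialize (HN N (le_n N)).
    assert (B : Cmod (J 0%nat w) <= K * (Rabs wy / Dd) ^ N).
    { rewrite (Hpow N), Cmod_mult, Cmod_pow, Hww.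
      eapply Rle_trans. { apply Rmult_le_compat_l; [apply pow_le, Rabs_pos|]. apply HJb; auto. }
      rewrite Hww. replace (Dd - Rabs wy) with 2 by (unfold Dd; ring). unfold K.
      right. unfold Rdiv. rewrite Rpow_mult_distr, pow_inv. field. apply pow_nonzero. lra. }
    rewrite Rabs_pos_eq in HN by (apply pow_le, Rdiv_le_0_compat; auto using Rabs_pos).
    assert (E : Cmod (J 0%nat w) / (K + 1) * (K + 1) = Cmod (J 0%nat w)) by (field; lra).
    assert (0 <= (Rabs wy / Dd) ^ N) by (apply pow_le, Rdiv_le_0_compat; auto using Rabs_pos).
    nra. }
  destruct (Hf w) as [Lw HLw].
  assert (Hinvok : CIok (fun z => / (z - w))%C a b c d).
  { apply CIok_cont. intros z Hz. apply Dv_ccont. apply Dv_inv.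
    - apply Dv_minus; [apply Dv_id|apply Dv_const].
    - apply Cminus_neq0. apply Hneq'; auto. }
  assert (Dec : J 0%nat w = (CI (gq f Lw w) a b c d + f w * CI (fun z => / (z - w))%C a b c d)%C).
  { unfold J. rewrite (CI_ext (Jf 0%nat w) (fun z => gq f Lw w z + f w * / (z - w))%C).
    - rewrite (CI_plus (gq f Lw w) (fun z => f w * / (z - w))%C).
      + rewrite (CI_scal (fun z => / (z - w))%C (f w)); auto.
      + apply CIok_all. intros z. apply gq_cont; auto.
      + apply CIok_scal; auto.
    - intros z Hz. unfold Jf, gq. destruct (ceq_dec z w) as [E|NE].
      + exfalso. apply (Hneq' z w); auto.
      + simpl. field. apply Cminus_neq0; auto. }
  rewrite CIF_zero in Dec; auto.
  2:{ unfold w, a, b. simpl. lra. }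
  2:{ unfold w, c, d. simpl. lra. }
  rewrite HJ0 in Dec.
  assert (Kpos : 0 < snd (CI (fun z => / (z - w))%C a b c d)) by (apply Kw_pos; auto).
  apply (Cmult_eq0_l (CI (fun z => / (z - w))%C a b c d) (f w)).
  - intro E. rewrite E in Kpos. simpl in Kpos. lra.
  - rewrite Cmult_comm. rewrite Dec. ring.
Qed.

Lemma ball_C_of_Cmod (z y : C) (d : R) : Cmod (y - z) < d -> @ball C_UniformSpace z d y.
Proof.
  intros H. split.
  - change (Rabs (fst y - fst z) < d). pose proof (re_le_Cmod (y - z)%C). simpl in H0.
    replace (fst y + - fst z) with (fst y - fst z) in H0 by ring. lra.
  - change (Rabs (snd y - snd z) < d). pose proof (im_le_Cmod (y - z)%C). simpl in H0.
    replace (snd y + - snd z) with (snd y - snd z) in H0 by ring. lra.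
Qed.

Lemma is_derive_cdiff (f : C -> C) z l : @is_derive C_AbsRing C_NormedModule f z l -> cdiff f z l.
Proof.
  intros [_ H] e He.
  assert (Hz : is_filter_lim (locally z) z) by (intros P HP; exact HP).
  specialize (H z Hz (mkposreal e He)). destruct H as [[d Hd] H].
  exists d. split; auto. intros y Hy. specialize (H y).
  refine ((fun H' => _) (H _)).
  2:{ exact Hy. }
  clear H. rename H' into H. simpl in H.
  change (Cmod (f y - f z - (y - z) * l)%C <= e * Cmod (y - z)%C) in H.
  replace (f y - f z - l * (y - z))%C with (f y - f z - (y - z) * l)%C by ring. exact H.
Qed.

Lemma ex_derive_Dv (f : C -> C) z : @ex_derive C_AbsRing C_NormedModule f z -> Dv f z.
Proof. intros [l H]. exists l. apply is_derive_cdiff; auto. Qed.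

Lemma Dv_shift (g : C -> C) (k : C) z : Dv g (z + k)%C -> Dv (fun u => g (u + k)%C) z.
Proof.
  intros [l H]. exists (l * (1 + 0))%C. apply (cdiff_comp g (fun u => u + k)%C z l (1 + 0)%C); auto.
  apply cdiff_plus; [apply cdiff_id|apply cdiff_const].
Qed.

Lemma pair_plus_R (x a : R) : ((x, 0) + RtoC a)%C = RtoC (x + a).
Proof. unfold RtoC, Cplus. simpl. f_equal. ring. Qed.

Lemma entire_fun_Dv1 (g : C2 -> C) w z : entire_fun g -> Dv (fun u => g (u, w)) z.
Proof. intros H. destruct (H z w) as (_ & H1 & _). apply ex_derive_Dv; auto. Qed.
Lemma entire_fun_Dv2 (g : C2 -> C) w z : entire_fun g -> Dv (fun u => g (w, u)) z.
Proof. intros H. destruct (H w z) as (_ & _ & H2). apply ex_derive_Dv; auto. Qed.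

Lemma periodic_comp (g : C2 -> C) (h : R2 -> R) (m n : Z) (sh : R) :
  entire_fun g ->
  (forall x y : R, g (RtoC x, RtoC y) = RtoC (h (x, y))) ->
  (forall x y : R, h (x + IZR m, y + IZR n) = h (x, y) + sh) ->
  forall z w : C, g ((z + IZR m)%C, (w + IZR n)%C) = (g (z, w) + sh)%C.
Proof.
  intros Hg Hext Hper.
  set (e := fun z w => (g ((z + IZR m)%C, (w + IZR n)%C) - g (z, w) - sh)%C).
  assert (HD1 : forall w z, Dv (fun u => e u w) z).
  { intros w z. unfold e. apply Dv_minus; [apply Dv_minus|apply Dv_const].
    - apply (Dv_shift (fun u => g (u, (w + IZR n)%C))). apply entire_fun_Dv1; auto.
    - apply entire_fun_Dv1; auto. }
  assert (HD2 : forall u z, Dv (fun w => e u w) z).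
  { intros u z. unfold e. apply Dv_minus; [apply Dv_minus|apply Dv_const].
    - apply (Dv_shift (fun w => g ((u + IZR m)%C, w))). apply entire_fun_Dv2; auto.
    - apply entire_fun_Dv2; auto. }
  assert (Hreal : forall x y : R, e (RtoC x) (RtoC y) = 0%C).
  { intros x y. unfold e. unfold RtoC at 1 3. rewrite !pair_plus_R. rewrite !Hext, Hper.
    apply injective_projections; simpl; ring. }
  assert (HA : forall y : R, forall u, e u (RtoC y) = 0%C).
  { intros y. apply (identity_R (fun u => e u (RtoC y))); auto. intros x. apply (Hreal x y). }
  assert (HB : forall u w, e u w = 0%C).
  { intros u. apply (identity_R (fun w => e u w)); auto. intros x. apply (HA x u). }
  intros z w. specialize (HB z w). unfold e in HB.
  replace (g ((z + IZR m)%C, (w + IZR n)%C)) with ((g ((z + IZR m)%C, (w + IZR n)%C) - g (z, w) - sh) + (g (z, w) + sh))%C by ring.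
  rewrite HB. ring.
Qed.

Lemma periodic_map (F : C2 -> C2) (f : R2 -> R2) :
  entire_map F -> extends f F -> lift_homotopic_id f ->
  forall (z w : C) (m n : Z), F ((z + IZR m)%C, (w + IZR n)%C) = ((fst (F (z, w)) + IZR m)%C, (snd (F (z, w)) + IZR n)%C).
Proof.
  intros [H1 H2] Hext Hlift z w m n.
  assert (E1 := periodic_comp (fun p => fst (F p)) (fun p => fst (f p)) m n (IZR m) H1
     ltac:(intros x y; cbv beta; rewrite Hext; reflexivity) ltac:(intros x y; cbv beta; rewrite Hlift; reflexivity) z w).
  assert (E2 := periodic_comp (fun p => snd (F p)) (fun p => snd (f p)) m n (IZR n) H2
     ltac:(intros x y; cbv beta; rewrite Hext; reflexivity) ltac:(intros x y; cbv beta; rewrite Hlift; reflexivity) z w).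
  cbv beta in E1, E2. apply injective_projections; simpl; auto.
Qed.

Definition d2 (x y : C2) := Cmod (fst x - fst y)%C + Cmod (snd x - snd y)%C.
Definition cnt (F : C2 -> C2) (x : C2) := forall e, 0 < e -> exists d, 0 < d /\
  forall y, d2 y x < d -> d2 (F y) (F x) < e.
Definition cntA (F : R -> C2 -> C2) (a : R) (x : C2) := forall e, 0 < e -> exists d, 0 < d /\
  forall b y, Rabs (b - a) < d -> d2 y x < d -> d2 (F b y) (F a x) < e.
Definition cc2 (g : C2 -> C) (x : C2) := forall e, 0 < e -> exists d, 0 < d /\
  forall y, d2 y x < d -> Cmod (g y - g x)%C < e.

Lemma d2_ge0 x y : 0 <= d2 x y.
Proof. unfold d2. pose proof (Cmod_ge_0 (fst x - fst y)%C). pose proof (Cmod_ge_0 (snd x - snd y)%C). lra. Qed.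

Lemma d2_refl x : d2 x x = 0.
Proof. unfold d2. replace (fst x - fst x)%C with (RtoC 0) by ring. replace (snd x - snd x)%C with (RtoC 0) by ring.
  rewrite Cmod_0. ring. Qed.

Lemma d2_sym x y : d2 x y = d2 y x.
Proof. unfold d2. rewrite (Cmod_minus_sym (fst x)), (Cmod_minus_sym (snd x)). auto. Qed.

Lemma d2_tri x y z : d2 x z <= d2 x y + d2 y z.
Proof. unfold d2.
  replace (fst x - fst z)%C with ((fst x - fst y) + (fst y - fst z))%C by ring.
  replace (snd x - snd z)%C with ((snd x - snd y) + (snd y - snd z))%C by ring.
  pose proof (Cmod_triangle (fst x - fst y) (fst y - fst z)).
  pose proof (Cmod_triangle (snd x - snd y) (snd y - snd z)). lra. Qed.

Lemma d2_fst x y : Cmod (fst x - fst y)%C <= d2 x y.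
Proof. unfold d2. pose proof (Cmod_ge_0 (snd x - snd y)%C). lra. Qed.
Lemma d2_snd x y : Cmod (snd x - snd y)%C <= d2 x y.
Proof. unfold d2. pose proof (Cmod_ge_0 (fst x - fst y)%C). lra. Qed.

Lemma cnt_pair g1 g2 x : cc2 g1 x -> cc2 g2 x -> cnt (fun p => (g1 p, g2 p)) x.
Proof.
  intros H1 H2 e He. destruct (H1 (e/2)) as [d1 [Hd1 K1]]; [lra|]. destruct (H2 (e/2)) as [d2' [Hd2 K2]]; [lra|].
  exists (Rmin d1 d2'). split; [apply Rmin_glb_lt; auto|]. intros y Hy.
  specialize (K1 y (Rlt_le_trans _ _ _ Hy (Rmin_l _ _))). specialize (K2 y (Rlt_le_trans _ _ _ Hy (Rmin_r _ _))).
  unfold d2. simpl. lra.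
Qed.

Lemma cnt_ext F G x : (forall y, F y = G y) -> cnt G x -> cnt F x.
Proof. intros E H e He. destruct (H e He) as [d [Hd K]]. exists d. split; auto. intros y Hy. rewrite !E. auto. Qed.

Lemma cc2_fst x : cc2 (fun p => fst p) x.
Proof. intros e He. exists e. split; auto. intros y Hy. pose proof (d2_fst y x). lra. Qed.
Lemma cc2_snd x : cc2 (fun p => snd p) x.
Proof. intros e He. exists e. split; auto. intros y Hy. pose proof (d2_snd y x). lra. Qed.
Lemma cc2_const k x : cc2 (fun _ => k) x.
Proof. intros e He. exists 1. split; [lra|]. intros y _. replace (k - k)%C with (RtoC 0) by ring. rewrite Cmod_0. auto. Qed.
Lemma cc2_plus g h x : cc2 g x -> cc2 h x -> cc2 (fun p => g p + h p)%C x.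
Proof.
  intros H1 H2 e He. destruct (H1 (e/2)) as [d1 [Hd1 K1]]; [lra|]. destruct (H2 (e/2)) as [d2' [Hd2 K2]]; [lra|].
  exists (Rmin d1 d2'). split; [apply Rmin_glb_lt; auto|]. intros y Hy.
  specialize (K1 y (Rlt_le_trans _ _ _ Hy (Rmin_l _ _))). specialize (K2 y (Rlt_le_trans _ _ _ Hy (Rmin_r _ _))).
  replace (g y + h y - (g x + h x))%C with ((g y - g x) + (h y - h x))%C by ring.
  eapply Rle_lt_trans; [apply Cmod_triangle|]. lra.
Qed.
Lemma cc2_comp (h : C -> C) g x : cc2 g x -> ccont h (g x) -> cc2 (fun p => h (g p)) x.
Proof.
  intros Hg Hh e He. destruct (Hh e He) as [d1 [Hd1 K1]]. destruct (Hg d1 Hd1) as [d [Hd K]].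
  exists d. split; [exact Hd|]. intros y Hy. apply K1. auto.
Qed.
Lemma cc2_ext g h x : (forall y, g y = h y) -> cc2 h x -> cc2 g x.
Proof. intros E H e He. destruct (H e He) as [d [Hd K]]. exists d. split; auto. intros y Hy. rewrite !E. auto. Qed.

Lemma prod_cont (phi psi : R -> R) x y : continuity_pt phi x -> continuity_pt psi y ->
  forall e, 0 < e -> exists d, 0 < d /\ forall a b, Rabs (a - x) < d -> Rabs (b - y) < d ->
     Rabs (phi a * psi b - phi x * psi y) < e.
Proof.
  intros H1 H2 e He.
  set (P := Rabs (phi x) + 1). set (Q := Rabs (psi y) + 1).
  assert (HP : 0 < P) by (unfold P; pose proof (Rabs_pos (phi x)); lra).
  assert (HQ : 0 < Q) by (unfold Q; pose proof (Rabs_pos (psi y)); lra).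
  set (e1 := e / (2 * Q)). set (e2 := Rmin 1 (e / (2 * P))).
  assert (He1 : 0 < e1) by (unfold e1; apply Rdiv_lt_0_compat; lra).
  assert (He2 : 0 < e2) by (unfold e2; apply Rmin_glb_lt; [lra|apply Rdiv_lt_0_compat; lra]).
  destruct (H1 e1 He1) as [d1 [Hd1 K1]]. destruct (H2 e2 He2) as [d2' [Hd2 K2]].
  exists (Rmin d1 d2'). split; [apply Rmin_glb_lt; auto|]. intros a b Ha Hb.
  assert (A1 : Rabs (phi a - phi x) < e1).
  { destruct (Req_dec a x) as [E|NE]; [subst; replace (phi x - phi x) with 0 by ring; rewrite Rabs_R0; auto|].
    apply K1. split; [split; [exact I|intro E; apply NE; auto]|]. unfold R_dist. eapply Rlt_le_trans; [apply Ha|apply Rmin_l]. }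
  assert (A2 : Rabs (psi b - psi y) < e2).
  { destruct (Req_dec b y) as [E|NE]; [subst; replace (psi y - psi y) with 0 by ring; rewrite Rabs_R0; auto|].
    apply K2. split; [split; [exact I|intro E; apply NE; auto]|]. unfold R_dist. eapply Rlt_le_trans; [apply Hb|apply Rmin_r]. }
  assert (E1 : e2 <= 1) by apply Rmin_l. assert (E2 : e2 <= e / (2 * P)) by apply Rmin_r.
  replace (phi a * psi b - phi x * psi y) with ((phi a - phi x) * psi b + phi x * (psi b - psi y)) by ring.
  eapply Rle_lt_trans; [apply Rabs_triang|]. rewrite !Rabs_mult.
  assert (Hpb : Rabs (psi b) <= Q).
  { unfold Q. replace (psi b) with ((psi b - psi y) + psi y) by ring. eapply Rle_trans; [apply Rabs_triang|]. lra. }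
  assert (T1 : Rabs (phi a - phi x) * Rabs (psi b) <= e1 * Q).
  { apply Rmult_le_compat; try apply Rabs_pos; lra. }
  assert (T2 : Rabs (phi x) * Rabs (psi b - psi y) <= P * e2).
  { apply Rmult_le_compat; try apply Rabs_pos; unfold P; lra. }
  assert (T1' : e1 * Q = e / 2) by (unfold e1; field; lra).
  assert (T2' : P * e2 <= e / 2).
  { apply Rle_trans with (P * (e / (2 * P))). apply Rmult_le_compat_l; lra. right. field. lra. }
  assert (Rabs (phi x) * Rabs (psi b - psi y) < e / 2 \/ Rabs (phi a - phi x) * Rabs (psi b) < e / 2).
  { right. apply Rle_lt_trans with (Rabs (phi a - phi x) * Q).
    apply Rmult_le_compat_l; [apply Rabs_pos|lra]. rewrite <- T1'. apply Rmult_lt_compat_r; lra. }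
  destruct H; lra.
Qed.

Lemma cont_sin x : continuity_pt sin x.
Proof. apply continuity_sin. Qed.
Lemma cont_cos x : continuity_pt cos x.
Proof. apply continuity_cos. Qed.
Lemma cont_cosh x : continuity_pt cosh x.
Proof. apply derivable_continuous_pt, derivable_pt_cosh. Qed.
Lemma cont_sinh x : continuity_pt sinh x.
Proof. apply derivable_continuous_pt, derivable_pt_sinh. Qed.

Lemma ccont_Csin z : ccont Csin z.
Proof.
  intros e He.
  destruct (prod_cont sin cosh (fst z) (snd z) (cont_sin _) (cont_cosh _) (e/2)) as [d1 [Hd1 K1]]; [lra|].
  destruct (prod_cont cos sinh (fst z) (snd z) (cont_cos _) (cont_sinh _) (e/2)) as [d2' [Hd2 K2]]; [lra|].
  exists (Rmin d1 d2'). split; [apply Rmin_glb_lt; auto|]. intros y Hy.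
  assert (Hr : Rabs (fst y - fst z) < Rmin d1 d2').
  { eapply Rle_lt_trans; [|apply Hy]. pose proof (re_le_Cmod (y - z)%C). simpl in H.
    replace (fst y + - fst z) with (fst y - fst z) in H by ring. auto. }
  assert (Hi : Rabs (snd y - snd z) < Rmin d1 d2').
  { eapply Rle_lt_trans; [|apply Hy]. pose proof (im_le_Cmod (y - z)%C). simpl in H.
    replace (snd y + - snd z) with (snd y - snd z) in H by ring. auto. }
  pose proof (Rmin_l d1 d2'). pose proof (Rmin_r d1 d2').
  specialize (K1 (fst y) (snd y) ltac:(lra) ltac:(lra)). specialize (K2 (fst y) (snd y) ltac:(lra) ltac:(lra)).
  eapply Rle_lt_trans; [apply Cmod_le_sum|]. unfold Csin, Re, Im. simpl.
  replace (sin (fst y) * cosh (snd y) + - (sin (fst z) * cosh (snd z))) with (sin (fst y) * cosh (snd y) - sin (fst z) * cosh (snd z)) by ring.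
  replace (cos (fst y) * sinh (snd y) + - (cos (fst z) * sinh (snd z))) with (cos (fst y) * sinh (snd y) - cos (fst z) * sinh (snd z)) by ring.
  lra.
Qed.

Lemma cc2_of_continuous (g : C2 -> C) x :
  continuous (g : prod_UniformSpace C_UniformSpace C_UniformSpace -> C_UniformSpace) x -> cc2 g x.
Proof.
  intros H e He.
  assert (He2 : 0 < e / 2) by lra.
  specialize (H (fun v => @ball C_UniformSpace (g x) (e/2) v) (locally_ball (g x) (mkposreal _ He2))).
  destruct H as [[d Hd] K]. exists d. split; auto. intros y Hy.
  assert (B : @ball (prod_UniformSpace C_UniformSpace C_UniformSpace) x d y).
  { split; apply ball_C_of_Cmod; eapply Rle_lt_trans; try apply Hy.
    - apply d2_fst. - apply d2_snd. }
  specialize (K y B). destruct K as [K1 K2].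
  change (Rabs (fst (g y) - fst (g x)) < e/2) in K1. change (Rabs (snd (g y) - snd (g x)) < e/2) in K2.
  eapply Rle_lt_trans; [apply Cmod_le_sum|]. simpl.
  replace (fst (g y) + - fst (g x)) with (fst (g y) - fst (g x)) by ring.
  replace (snd (g y) + - snd (g x)) with (snd (g y) - snd (g x)) by ring. lra.
Qed.

Lemma cnt_entire (F : C2 -> C2) x : entire_map F -> cnt F x.
Proof.
  intros [H1 H2]. apply (cnt_ext F (fun p => (fst (F p), snd (F p)))).
  { intros y. destruct (F y); auto. }
  apply cnt_pair; apply cc2_of_continuous; destruct x as [z w]; [apply (H1 z w)|apply (H2 z w)].
Qed.

Lemma ccont_comp (g h : C -> C) z : ccont h z -> ccont g (h z) -> ccont (fun y => g (h y)) z.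
Proof. intros Hh Hg e He. destruct (Hg e He) as [d1 [Hd1 K1]]. destruct (Hh d1 Hd1) as [d [Hd K]].
  exists d. split; [exact Hd|]. intros y Hy. apply K1, K. auto. Qed.

Lemma ccont_scal k z : ccont (fun y => k * y)%C z.
Proof. apply cdiff_ccont with (k * 1)%C. apply cdiff_scal, cdiff_id. Qed.

Lemma ccont_sinpart (c k : R) z : ccont (fun u => RtoC c * Csin (RtoC k * u))%C z.
Proof.
  apply (ccont_comp (fun v => RtoC c * v)%C (fun u => Csin (RtoC k * u))%C).
  - apply (ccont_comp Csin (fun u => RtoC k * u)%C). apply ccont_scal. apply ccont_Csin.
  - apply ccont_scal.
Qed.

Lemma cnt_Phi q c x : cnt (Phi q c) x.
Proof.
  apply (cnt_ext _ (fun p => ((fst p + RtoC (/ (2 * IZR q)))%C,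
     (snd p + RtoC c * Csin (RtoC (2 * PI * IZR q) * fst p))%C))); [intros; reflexivity|].
  apply cnt_pair.
  - apply cc2_plus; [apply cc2_fst|apply cc2_const].
  - apply cc2_plus; [apply cc2_snd|]. apply (cc2_comp (fun u => RtoC c * Csin (RtoC (2 * PI * IZR q) * u))%C).
    apply cc2_fst. apply ccont_sinpart.
Qed.

Lemma cnt_Phi_inv q c x : cnt (Phi_inv q c) x.
Proof.
  apply (cnt_ext _ (fun p => ((fst p - RtoC (/ (2 * IZR q)))%C,
     (snd p - RtoC c * Csin (RtoC (2 * PI * IZR q) * (fst p - RtoC (/ (2 * IZR q)))))%C))); [intros; reflexivity|].
  apply cnt_pair.
  - apply (cc2_ext _ (fun p => fst p + (-1) * RtoC (/ (2 * IZR q)))%C); [intros; ring|].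
    apply cc2_plus; [apply cc2_fst|apply cc2_const].
  - apply (cc2_ext _ (fun p => snd p + (-1) * (RtoC c * Csin (RtoC (2 * PI * IZR q) * (fst p - RtoC (/ (2 * IZR q))))))%C);
      [intros; ring|].
    apply cc2_plus; [apply cc2_snd|].
    apply (cc2_comp (fun u => (-1) * (RtoC c * Csin (RtoC (2 * PI * IZR q) * (u - RtoC (/ (2 * IZR q))))))%C (fun p => fst p)).
    apply cc2_fst.
    apply (ccont_comp (fun v => (-1) * v)%C (fun u => RtoC c * Csin (RtoC (2 * PI * IZR q) * (u - RtoC (/ (2 * IZR q)))))%C).
    + apply (ccont_comp (fun u => RtoC c * Csin (RtoC (2 * PI * IZR q) * u))%C (fun u => u - RtoC (/ (2 * IZR q)))%C).
      * apply cdiff_ccont with (1 - 0)%C. apply (cdiff_plus (fun y => y) (fun _ => - RtoC (/ (2 * IZR q)))%C).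
        apply cdiff_id. replace (-0)%C with (RtoC 0) by ring. apply cdiff_const.
      * apply ccont_sinpart.
    + apply ccont_scal.
Qed.

Lemma cntA_const F a x : cnt F x -> cntA (fun _ => F) a x.
Proof. intros H e He. destruct (H e He) as [d [Hd K]]. exists d. split; [exact Hd|]. intros b y _ Hy. auto. Qed.

Lemma cntA_comp F G a x : cntA F a x -> cntA G a (F a x) -> cntA (fun b y => G b (F b y)) a x.
Proof.
  intros HF HG e He. destruct (HG e He) as [d1 [Hd1 K1]]. destruct (HF d1 Hd1) as [d [Hd K]].
  exists (Rmin d d1). split; [apply Rmin_glb_lt; auto|]. intros b y Hb Hy.
  apply K1. eapply Rlt_le_trans; [apply Hb|apply Rmin_r]. apply K.
  eapply Rlt_le_trans; [apply Hb|apply Rmin_l]. eapply Rlt_le_trans; [apply Hy|apply Rmin_l].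
Qed.

Lemma cntA_iter F : (forall a x, cntA F a x) -> forall i a x, cntA (fun b y => Nat.iter i (F b) y) a x.
Proof.
  intros H i. induction i as [|i IH]; intros a x.
  - intros e He. exists e. split; [exact He|]. intros b y _ Hy. simpl. auto.
  - simpl. apply (cntA_comp (fun b y => Nat.iter i (F b) y) F a x); auto.
Qed.

Lemma cntA_Rot a x : cntA Rot a x.
Proof.
  intros e He. exists (e/2). split; [lra|]. intros b y Hb Hy. unfold Rot, d2. simpl.
  replace (fst y + RtoC b - (fst x + RtoC a))%C with ((fst y - fst x) + RtoC (b - a))%C
    by (unfold RtoC, Cplus, Cminus, Copp; simpl; apply injective_projections; simpl; ring).
  pose proof (Cmod_triangle (fst y - fst x) (RtoC (b - a))). rewrite Cmod_R in H. unfold d2 in Hy. lra.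
Qed.

Lemma cntA_G Tc Tic a x : entire_map Tc -> entire_map Tic -> cntA (Gmap Tc Tic) a x.
Proof.
  intros H1 H2. unfold Gmap.
  apply (cntA_comp (fun b y => Rot b (Tc y)) (fun _ => Tic)).
  - apply (cntA_comp (fun _ => Tc) Rot). apply cntA_const, cnt_entire; auto. apply cntA_Rot.
  - apply cntA_const, cnt_entire; auto.
Qed.

Lemma cntA_G' Tc Tic q c a x : entire_map Tc -> entire_map Tic -> cntA (Gmap' Tc Tic q c) a x.
Proof.
  intros H1 H2. unfold Gmap'.
  apply (cntA_comp (fun b y => Phi_inv q c (Rot b (Phi q c (Tc y)))) (fun _ => Tic)).
  - apply (cntA_comp (fun b y => Rot b (Phi q c (Tc y))) (fun _ => Phi_inv q c)).
    + apply (cntA_comp (fun _ y => Phi q c (Tc y)) Rot).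
      * apply cntA_const. intros e He.
        destruct (cnt_Phi q c (Tc x) e He) as [d1 [Hd1 K1]]. destruct (cnt_entire Tc x H1 d1 Hd1) as [d [Hd K]].
        exists d. split; [exact Hd|]. intros y Hy. apply K1, K. auto.
      * apply cntA_Rot.
    + apply cntA_const, cnt_Phi_inv.
  - apply cntA_const, cnt_entire; auto.
Qed.

Lemma sin_cos_Z x k : sin (x + 2 * PI * IZR k) = sin x /\ cos (x + 2 * PI * IZR k) = cos x.
Proof.
  destruct (Z_le_gt_dec 0 k) as [Hk|Hk].
  - rewrite <- (Z2Nat.id k Hk), <- INR_IZR_INZ.
    replace (x + 2 * PI * INR (Z.to_nat k)) with (x + 2 * INR (Z.to_nat k) * PI) by ring.
    split; [apply sin_period|apply cos_period].
  - assert (Hk' : (0 <= - k)%Z) by lia.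
    pose proof (sin_period (x + 2 * PI * IZR k) (Z.to_nat (- k))).
    pose proof (cos_period (x + 2 * PI * IZR k) (Z.to_nat (- k))).
    rewrite INR_IZR_INZ, (Z2Nat.id _ Hk'), opp_IZR in H, H0.
    replace (x + 2 * PI * IZR k + 2 * - IZR k * PI) with x in H, H0 by ring. split; auto.
Qed.

Lemma Csin_shift z k : Csin (z + RtoC (2 * PI * IZR k))%C = Csin z.
Proof.
  unfold Csin, Re, Im, RtoC, Cplus. simpl. rewrite Rplus_0_r. destruct (sin_cos_Z (fst z) k) as [E1 E2].
  rewrite E1, E2. reflexivity.
Qed.

Definition sh (m n : Z) (p : C2) : C2 := ((fst p + IZR m)%C, (snd p + IZR n)%C).

Lemma lift_Ti (T Ti : R2 -> R2) : lift_homotopic_id T -> (forall u, Ti (T u) = u) -> (forall u, T (Ti u) = u) ->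
  lift_homotopic_id Ti.
Proof.
  intros HT H1 H2 x y m n.
  set (v := Ti (x, y)).
  assert (E : T (fst v + IZR m, snd v + IZR n) = (x + IZR m, y + IZR n)).
  { rewrite HT. replace (fst v, snd v) with v by (destruct v; auto). unfold v. rewrite H2. auto. }
  rewrite <- E, H1. reflexivity.
Qed.

Lemma Tsh (F : C2 -> C2) (f : R2 -> R2) m n p : entire_map F -> extends f F -> lift_homotopic_id f ->
  F (sh m n p) = sh m n (F p).
Proof. intros. destruct p as [z w]. unfold sh. simpl. apply (periodic_map F f); auto. Qed.

Lemma Rot_sh a m n p : Rot a (sh m n p) = sh m n (Rot a p).
Proof. unfold Rot, sh. simpl. f_equal. ring. Qed.

Lemma kmul_shift (q m : Z) (z : C) :
  (RtoC (2 * PI * IZR q) * (z + IZR m))%C = (RtoC (2 * PI * IZR q) * z + RtoC (2 * PI * IZR (q * m)))%C.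
Proof. rewrite mult_IZR. unfold RtoC, Cmult, Cplus. simpl. apply injective_projections; simpl; ring. Qed.

Lemma Phi_sh q c m n p : Phi q c (sh m n p) = sh m n (Phi q c p).
Proof.
  unfold Phi, sh. simpl. rewrite kmul_shift, Csin_shift. f_equal; ring.
Qed.

Lemma Phi_inv_sh q c m n p : Phi_inv q c (sh m n p) = sh m n (Phi_inv q c p).
Proof.
  unfold Phi_inv, sh. simpl.
  replace (fst p + IZR m - RtoC (/ (2 * IZR q)))%C with ((fst p - RtoC (/ (2 * IZR q))) + IZR m)%C by ring.
  rewrite kmul_shift, Csin_shift. f_equal; ring.
Qed.

Lemma G_sh Tc Tic T Ti a m n p : entire_map Tc -> extends T Tc -> lift_homotopic_id T ->
  entire_map Tic -> extends Ti Tic -> lift_homotopic_id Ti ->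
  Gmap Tc Tic a (sh m n p) = sh m n (Gmap Tc Tic a p).
Proof. intros. unfold Gmap. rewrite (Tsh Tc T), Rot_sh, (Tsh Tic Ti); auto. Qed.

Lemma G'_sh Tc Tic T Ti q c a m n p : entire_map Tc -> extends T Tc -> lift_homotopic_id T ->
  entire_map Tic -> extends Ti Tic -> lift_homotopic_id Ti ->
  Gmap' Tc Tic q c a (sh m n p) = sh m n (Gmap' Tc Tic q c a p).
Proof. intros. unfold Gmap'. rewrite (Tsh Tc T), Phi_sh, Rot_sh, Phi_inv_sh, (Tsh Tic Ti); auto. Qed.

Lemma iter_sh (F : C2 -> C2) m n : (forall p, F (sh m n p) = sh m n (F p)) ->
  forall i p, Nat.iter i F (sh m n p) = sh m n (Nat.iter i F p).
Proof. intros H i. induction i as [|i IH]; intros p; simpl; auto. rewrite IH. auto. Qed.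

Lemma Phi_at_rational (p q : Z) c w : IZR q <> 0 ->
  Phi_inv q c (Rot (IZR p / IZR q) (Phi q c w)) = Rot (IZR p / IZR q) w.
Proof.
  intros Hq. unfold Phi_inv, Phi, Rot. simpl.
  replace (fst w + RtoC (/ (2 * IZR q)) + RtoC (IZR p / IZR q) - RtoC (/ (2 * IZR q)))%C
    with (fst w + RtoC (IZR p / IZR q))%C by ring.
  replace (RtoC (2 * PI * IZR q) * (fst w + RtoC (IZR p / IZR q)))%C
    with (RtoC (2 * PI * IZR q) * fst w + RtoC (2 * PI * IZR p))%C.
  2:{ unfold RtoC, Cmult, Cplus. simpl. apply injective_projections; simpl; field; auto. }
  rewrite Csin_shift. f_equal. ring.
Qed.

Lemma G_eq_at_rational Tc Tic (p q : Z) c w : IZR q <> 0 ->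
  Gmap' Tc Tic q c (IZR p / IZR q) w = Gmap Tc Tic (IZR p / IZR q) w.
Proof. intros Hq. unfold Gmap', Gmap. rewrite Phi_at_rational; auto. Qed.

Lemma iter_ext (F G : C2 -> C2) : (forall p, F p = G p) -> forall i p, Nat.iter i F p = Nat.iter i G p.
Proof. intros H i. induction i; intros p; simpl; auto. rewrite IHi. auto. Qed.

Lemma min_over (N : nat) (P : nat -> R -> Prop) :
  (forall i d d', 0 < d' <= d -> P i d -> P i d') ->
  (forall i, (i <= N)%nat -> exists d, 0 < d /\ P i d) -> exists d, 0 < d /\ forall i, (i <= N)%nat -> P i d.
Proof.
  intros Hmono H. induction N as [|N IH].
  - destruct (H 0%nat (le_n 0)) as [d [Hd Hp]]. exists d. split; auto. intros i Hi.
    assert (i = 0%nat) by lia. subst. auto.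
  - destruct IH as [d1 [Hd1 K1]]. { intros i Hi. apply H. lia. }
    destruct (H (S N) (le_n _)) as [d2 [Hd2 K2]].
    exists (Rmin d1 d2). split; [apply Rmin_glb_lt; auto|]. intros i Hi.
    destruct (Nat.eq_dec i (S N)) as [E|NE].
    + subst. apply (Hmono _ d2); auto. split; [apply Rmin_glb_lt; auto|apply Rmin_r].
    + apply (Hmono _ d1). split; [apply Rmin_glb_lt; auto|apply Rmin_l]. apply K1. lia.
Qed.

Lemma pos_le4 (x : posreal) : pos x <= 4 * pos x.
Proof. pose proof (cond_pos x). lra. Qed.

Lemma sum_lt4 (a b : R) (x : posreal) : a < 2 * pos x -> b < 2 * pos x -> a + b < 4 * pos x.
Proof. lra. Qed.

Lemma Cmod_lt_coord (u v : C) (e : R) : Rabs (fst u - fst v) < e -> Rabs (snd u - snd v) < e -> Cmod (u - v)%C < 2 * e.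
Proof.
  intros H1 H2. eapply Rle_lt_trans; [apply Cmod_le_sum|]. simpl.
  replace (fst u + - fst v) with (fst u - fst v) by ring. replace (snd u + - snd v) with (snd u - snd v) by ring. lra.
Qed.

Definition pt4 (t : Compactness.Tn 4 R) : C2 :=
  match t with (x1, (x2, (x3, (x4, _)))) => ((x1, x2), (x3, x4)) end.
Definition of4 (z : C2) : Compactness.Tn 4 R :=
  (fst (fst z), (snd (fst z), (fst (snd z), (snd (snd z), tt)))).

Theorem corollary2p1
  (T Ti : R2 -> R2) (Tc Tic : C2 -> C2)
  (HTlift : lift_homotopic_id T)
  (HTiT : forall u : R2, Ti (T u) = u) (HTTi : forall u : R2, T (Ti u) = u)
  (HTc : extends T Tc) (HTic : extends Ti Tic)
  (HTent : entire_map Tc) (HTient : entire_map Tic)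
  (p q : Z) (Hcop : Z.gcd p q = 1%Z) (Hq : (1 <= q)%Z)
  (Hpq : 0 <= IZR p / IZR q <= 1)
  (c : R) (Hc : 0 <= c) :
  forall (r eps : R) (tau : nat), 0 <= r -> 0 < eps ->
  exists delta : R, 0 < delta /\
    forall alpha : R, Rabs (alpha - IZR p / IZR q) < delta ->
      exists M : R, M < eps /\
        forall (i : nat) (z : C2), (i <= tau)%nat -> in_strip r z ->
          Cmod (fst (Nat.iter i (Gmap Tc Tic alpha) z) - fst (Nat.iter i (Gmap' Tc Tic q c alpha) z))%C <= M /\
          Cmod (snd (Nat.iter i (Gmap Tc Tic alpha) z) - snd (Nat.iter i (Gmap' Tc Tic q c alpha) z))%C <= M.
Proof.
  intros r eps tau Hr Heps.
  set (a0 := IZR p / IZR q).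
  assert (Hq0 : IZR q <> 0) by (apply not_0_IZR; lia).
  assert (HTilift : lift_homotopic_id Ti) by (apply (lift_Ti T); auto).
  set (G := Gmap Tc Tic). set (G' := Gmap' Tc Tic q c).
  assert (StepA : forall t : C2, exists d, 0 < d /\ forall i, (i <= tau)%nat -> forall b y,
     Rabs (b - a0) < d -> d2 y t < d -> d2 (Nat.iter i (G' b) y) (Nat.iter i (G b) y) < eps / 2).
  { intros t. apply min_over.
    - intros i d d' [Hd' Hdd] Hp b y Hb Hy. apply Hp; lra.
    - intros i Hi.
      destruct (cntA_iter G (fun a x => cntA_G Tc Tic a x HTent HTient) i a0 t (eps/4)) as [d1 [Hd1 K1]]; [lra|].
      destruct (cntA_iter G' (fun a x => cntA_G' Tc Tic q c a x HTent HTient) i a0 t (eps/4)) as [d2' [Hd2 K2]]; [lra|].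
      exists (Rmin d1 d2'). split; [apply Rmin_glb_lt; auto|]. intros b y Hb Hy.
      pose proof (Rmin_l d1 d2'). pose proof (Rmin_r d1 d2').
      specialize (K1 b y ltac:(lra) ltac:(lra)). specialize (K2 b y ltac:(lra) ltac:(lra)).
      assert (E : Nat.iter i (G' a0) t = Nat.iter i (G a0) t).
      { apply iter_ext. intros w. unfold G, G', a0. apply G_eq_at_rational; auto. }
      pose proof (d2_tri (Nat.iter i (G' b) y) (Nat.iter i (G' a0) t) (Nat.iter i (G b) y)).
      pose proof (d2_tri (Nat.iter i (G' a0) t) (Nat.iter i (G a0) t) (Nat.iter i (G b) y)).
      rewrite E in H1, K2. rewrite d2_sym in K1. lra. }
  assert (Hg : forall t4 : Compactness.Tn 4 R, exists d : posreal, forall i, (i <= tau)%nat -> forall b y,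
     Rabs (b - a0) < 4 * d -> d2 y (pt4 t4) < 4 * d -> d2 (Nat.iter i (G' b) y) (Nat.iter i (G b) y) < eps / 2).
  { intros t4. destruct (StepA (pt4 t4)) as [d [Hd K]].
    assert (Hd4 : 0 < d / 4) by lra. exists (mkposreal _ Hd4). simpl. intros i Hi b y Hb Hy.
    apply K; auto; lra. }
  set (gauge := fun t4 => proj1_sig (constructive_indefinite_description _ (Hg t4))).
  assert (Hgauge : forall t4 i, (i <= tau)%nat -> forall b y,
     Rabs (b - a0) < 4 * gauge t4 -> d2 y (pt4 t4) < 4 * gauge t4 -> d2 (Nat.iter i (G' b) y) (Nat.iter i (G b) y) < eps / 2).
  { intros t4. unfold gauge. destruct (constructive_indefinite_description _ (Hg t4)) as [d K]. simpl. exact K. }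
  set (lo := (0, (-r, (0, (-r, tt)))) : Compactness.Tn 4 R).
  set (hi := (1, (r, (1, (r, tt)))) : Compactness.Tn 4 R).
  destruct (compactness_value 4 lo hi gauge) as [d Hd].
  assert (Box : forall alpha, Rabs (alpha - a0) < d -> forall i z0, (i <= tau)%nat ->
     0 <= fst (fst z0) <= 1 -> -r <= snd (fst z0) <= r -> 0 <= fst (snd z0) <= 1 -> -r <= snd (snd z0) <= r ->
     d2 (Nat.iter i (G' alpha) z0) (Nat.iter i (G alpha) z0) < eps / 2).
  { intros alpha Ha i z0 Hi B1 B2 B3 B4.
    assert (Hb : bounded_n 4 lo hi (of4 z0)) by (simpl; tauto).
    specialize (Hd (of4 z0) Hb). apply NNPP. intro Hneg. apply Hd. intros [t4 [Ht1 [Ht2 Ht3]]]. apply Hneg.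
    destruct t4 as [x1 [x2 [x3 [x4 []]]]]. simpl in Ht2.
    destruct Ht2 as [C1 [C2' [C3 [C4 _]]]].
    apply (Hgauge (x1, (x2, (x3, (x4, tt)))) i Hi).
    - eapply Rlt_le_trans; [apply Ha|]. eapply Rle_trans; [exact Ht3|].
      apply pos_le4.
    - unfold d2, pt4. simpl.
      pose proof (Cmod_lt_coord (fst z0) (x1, x2) _ C1 C2').
      pose proof (Cmod_lt_coord (snd z0) (x3, x4) _ C3 C4).
      simpl in H, H0. apply sum_lt4; auto. }
  exists d. split; [apply cond_pos|]. intros alpha Ha. exists (eps / 2). split; [lra|].
  intros i z Hi Hz. destruct Hz as [Hz1 Hz2].
  set (m := (up (fst (fst z)) - 1)%Z). set (n := (up (fst (snd z)) - 1)%Z).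
  set (z0 := sh (- m) (- n) z).
  assert (Ez : z = sh m n z0).
  { unfold z0, sh. destruct z as [z1 z2]. simpl. rewrite !opp_IZR, !RtoC_opp.
    f_equal; ring. }
  destruct (archimed (fst (fst z))) as [Ar1 Ar2]. destruct (archimed (fst (snd z))) as [Ar3 Ar4].
  assert (Bz : 0 <= fst (fst z0) <= 1 /\ -r <= snd (fst z0) <= r /\ 0 <= fst (snd z0) <= 1 /\ -r <= snd (snd z0) <= r).
  { unfold z0, sh, m, n. simpl. rewrite !opp_IZR, !minus_IZR. unfold Im in Hz1, Hz2.
    unfold Rabs in Hz1, Hz2. destruct (Rcase_abs (snd (fst z))); destruct (Rcase_abs (snd (snd z)));
    repeat split; lra. }
  destruct Bz as (B1 & B2 & B3 & B4).
  specialize (Box alpha Ha i z0 Hi B1 B2 B3 B4).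
  assert (SG : forall w, G alpha (sh m n w) = sh m n (G alpha w)).
  { intros w. unfold G. apply (G_sh Tc Tic T Ti); auto. }
  assert (SG' : forall w, G' alpha (sh m n w) = sh m n (G' alpha w)).
  { intros w. unfold G'. apply (G'_sh Tc Tic T Ti); auto. }
  change (Gmap Tc Tic alpha) with (G alpha). change (Gmap' Tc Tic q c alpha) with (G' alpha).
  rewrite Ez, (iter_sh (G alpha) m n SG), (iter_sh (G' alpha) m n SG').
  unfold sh. simpl.
  set (A := Nat.iter i (G alpha) z0) in *. set (B := Nat.iter i (G' alpha) z0) in *.
  replace (fst A + IZR m - (fst B + IZR m))%C with (fst A - fst B)%C by ring.
  replace (snd A + IZR n - (snd B + IZR n))%C with (snd A - snd B)%C by ring.
  rewrite (Cmod_minus_sym (fst A)), (Cmod_minus_sym (snd A)).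
  pose proof (d2_fst B A). pose proof (d2_snd B A). lra.
Qed.
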